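(* Assume the composite setting below with conditions (G1), (G2) and (D). Apply Algorithm TR to $f(u)=J(S(u),u)$ with the model function $\phi$ defined below, and suppose there is $C_H>0$ with $\|H_k\|\le C_H$ for all $k$. If the algorithm does not terminate after finitely many iterations, then every accumulation point $\bar u$ of the iterates is C-stationary, i.e. $0\in\partial f(\bar u)$.
   Context: Composite setting: $J:\mathbb{R}^m\times\mathbb{R}^n\to\mathbb{R}$ continuously differentiable; $S:\mathbb{R}^n\to\mathbb{R}^m$ locally Lipschitz continuous and directionally differentiable (directional derivative $S'(u;h)$); $f(u):=J(S(u),u)$. $\partial_B S(u)$ is the Bouligand subdifferential: all limits $\lim_j S'(u_j)$ with $u_j\to u$ and $S$ differentiable at $u_j$. $\partial f(u)$ is the Clarke subdifferential of $f$. $B_r(x)$ is the closed Euclidean ball; $\|\cdot\|$ is the Euclidean/spectral norm; $a/0:=+\infty$ in minima. For each $u\in\mathbb{R}^n$, $\Delta>0$ let $\mathcal G(u,\Delta)\subset\mathbb{R}^{m\times n}$ be a nonempty bounded set, and define the model $\phi(u,\Delta;d):=\sup_{G\in\mathcal G(u,\Delta)}\langle G^\top\nabla_yJ(S(u),u)+\nabla_uJ(S(u),u),d\rangle$ and $\psi(u,\Delta):=-\min_{\|h\|\le1}\phi(u,\Delta;h)$. Conditions: (G1) $\bigcup_{\xi\in B_\Delta(u)}\partial_BS(\xi)\subseteq\mathcal G(u,\Delta)$ for all $u$, $\Delta>0$; (G2) if $(u_k,\Delta_k)\to(u,0)$ with $0\notin\partial f(u)$, then $\sup_{G\in\mathcal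 G(u_k,\Delta_k)}\inf_{W\in\partial_BS(u)}\|G-W\|\to0$; (D) for all $u,h\in\mathbb{R}^n$ there is $G\in\partial_BS(u)$ with $S'(u;h)=Gh$. Algorithm TR: choose $\Delta_{\min}>0$, $0<\eta_1<\eta_2<1$, $0<\beta_1<1<\beta_2$, $0<\mu\le1$, $u_0$, $\Delta_0>\Delta_{\min}$. For $k=0,1,\dots$: choose $g_k\in\partial f(u_k)$ and symmetric $H_k$. If $g_k=0$ stop. If $\Delta_k\ge\Delta_{\min}$: choose $d_k$ with $\|d_k\|\le\Delta_k$ and $f(u_k)-q_k(d_k)\ge\frac{\mu}{2}\|g_k\|\min\{\Delta_k,\|g_k\|/\|H_k\|\}$, $q_k(d)=f(u_k)+\langle g_k,d\rangle+\frac12d^\top H_kd$, and $\rho_k=\frac{f(u_k)-f(u_k+d_k)}{f(u_k)-q_k(d_k)}$. If $\Delta_k<\Delta_{\min}$: with $\psi_k=\psi(u_k,\Delta_k)$ choose $d_k$ with $\|d_k\|\le\Delta_k$ and $f(u_k)-\tilde q_k(d_k)\ge\frac{\mu}{2}\psi_k\min\{\Delta_k,\psi_k/\|H_k\|\}$, $\tilde q_k(d)=f(u_k)+\phi(u_k,\Delta_k;d)+\frac12d^\top H_kd$, and $\rho_k=\frac{f(u_k)-f(u_k+d_k)}{f(u_k)-\tilde q_k(d_k)}$ if $\psi_k>\|g_k\|\Delta_k$, $\rho_k=0$ otherwise. Update: $u_{k+1}=u_k$ if $\rho_k\le\eta_1$, else $u_{k+1}=u_k+d_k$; $\Delta_{k+1}=\beta_1\Delta_k$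 if $\rho_k\le\eta_1$, $\max\{\Delta_{\min},\Delta_k\}$ if $\eta_1<\rho_k\le\eta_2$, $\max\{\Delta_{\min},\beta_2\Delta_k\}$ if $\rho_k>\eta_2$. *)

(* Defs.v *)
From Stdlib Require Fin.
From Stdlib Require Import Reals Lra ClassicalEpsilon.
Open Scope R_scope.

Definition vec (n : nat) := Fin.t n -> R.
Definition mat (m n : nat) := Fin.t m -> Fin.t n -> R.

Fixpoint sumfin (n : nat) : (Fin.t n -> R) -> R :=
  match n return (Fin.t n -> R) -> R with
  | O => fun _ => 0
  | Datatypes.S p => fun f => f Fin.F1 + sumfin p (fun i => f (Fin.FS i))
  end.

Definition vzero {n} : vec n := fun _ => 0.
Definition vadd {n} (x y : vec n) : vec n := fun i => x i + y i.
Definition vsub {n} (x y : vec n) : vec n := fun i => x i - y i.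
Definition vscal {n} (a : R) (x : vec n) : vec n := fun i => a * x i.
Definition dot {n} (x y : vec n) : R := sumfin n (fun i => x i * y i).
Definition vnorm {n} (x : vec n) : R := sqrt (dot x x).

Definition mvmul {m n} (A : mat m n) (x : vec n) : vec m :=
  fun i => sumfin n (fun j => A i j * x j).
Definition mtr {m n} (A : mat m n) : mat n m := fun j i => A i j.
Definition msub {m n} (A B : mat m n) : mat m n := fun i j => A i j - B i j.
Definition symmetric {n} (A : mat n n) : Prop := forall i j, A i j = A j i.

(* The least upper bound (meaningful when E is nonempty and bounded above). *)
Definition Rsup (E : R -> Prop) : R := epsilon (inhabits 0) (fun s => is_lub E s).
(* The greatest lower bound (meaningful when E is nonempty and bounded below). *)
Definition Rinf (E : R -> Prop) : R := - Rsup (fun x => E (- x)).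

Definition mnorm {m n} (A : mat m n) : R :=
  Rsup (fun s => exists h : vec n, vnorm h <= 1 /\ s = vnorm (mvmul A h)).

(* min{D, a/b} with the convention a/0 := +infinity *)
Definition min_div (D a b : R) : R :=
  if Req_EM_T b 0 then D else Rmin D (a / b).

Definition Rseq_conv (x : nat -> R) (l : R) : Prop :=
  forall eps, 0 < eps -> exists N, forall k, (N <= k)%nat -> Rabs (x k - l) < eps.
Definition vseq_conv {n} (x : nat -> vec n) (l : vec n) : Prop :=
  forall eps, 0 < eps -> exists N, forall k, (N <= k)%nat -> vnorm (vsub (x k) l) < eps.
Definition mseq_conv {m n} (x : nat -> mat m n) (l : mat m n) : Prop :=
  forall eps, 0 < eps -> exists N, forall k, (N <= k)%nat -> mnorm (msub (x k) l) < eps.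
Definition accumulation_point {n} (x : nat -> vec n) (ubar : vec n) : Prop :=
  forall eps, 0 < eps -> forall N, exists k, (N <= k)%nat /\ vnorm (vsub (x k) ubar) < eps.

Definition frechet_diff {m n} (S : vec n -> vec m) (u : vec n) (A : mat m n) : Prop :=
  forall eps, 0 < eps -> exists del, 0 < del /\
    forall h, vnorm h < del ->
      vnorm (vsub (vsub (S (vadd u h)) (S u)) (mvmul A h)) <= eps * vnorm h.

Definition loc_lipschitz {m n} (S : vec n -> vec m) : Prop :=
  forall u, exists r L, 0 < r /\
    forall x y, vnorm (vsub x u) <= r -> vnorm (vsub y u) <= r ->
      vnorm (vsub (S x) (S y)) <= L * vnorm (vsub x y).

Definition dir_deriv {m n} (S : vec n -> vec m) (u h : vec n) (v : vec m) : Prop :=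
  forall eps, 0 < eps -> exists del, 0 < del /\
    forall t, 0 < t < del ->
      vnorm (vsub (vscal (/ t) (vsub (S (vadd u (vscal t h))) (S u))) v) <= eps.

Definition bouligand {m n} (S : vec n -> vec m) (u : vec n) (W : mat m n) : Prop :=
  exists (uj : nat -> vec n) (Aj : nat -> mat m n),
    vseq_conv uj u /\ (forall j, frechet_diff S (uj j) (Aj j)) /\ mseq_conv Aj W.

(* Clarke subdifferential: g in df(u) iff <g,h> <= f°(u;h) for all h, where
   f°(u;h) = limsup_{y -> u, t -> 0+} (f(y+th) - f(y))/t.  The inequality
   "a <= limsup" is written out: every neighbourhood contains quotients > a - eps. *)
Definition clarke_sub {n} (f : vec n -> R) (u g : vec n) : Prop :=
  forall h eps del, 0 < eps -> 0 < del ->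
    exists y t, vnorm (vsub y u) < del /\ 0 < t < del /\
      dot g h - eps < (f (vadd y (vscal t h)) - f y) / t.

Definition compf {m n} (J : vec m -> vec n -> R) (S : vec n -> vec m) (u : vec n) : R :=
  J (S u) u.

Definition has_gradients {m n} (J : vec m -> vec n -> R)
  (Jy : vec m -> vec n -> vec m) (Ju : vec m -> vec n -> vec n) : Prop :=
  forall y u eps, 0 < eps -> exists del, 0 < del /\
    forall a b, vnorm a + vnorm b < del ->
      Rabs (J (vadd y a) (vadd u b) - J y u - dot (Jy y u) a - dot (Ju y u) b)
        <= eps * (vnorm a + vnorm b).

Definition continuous2 {m n p} (F : vec m -> vec n -> vec p) : Prop :=
  forall y u eps, 0 < eps -> exists del, 0 < del /\
    forall y' u', vnorm (vsub y' y) + vnorm (vsub u' u) < del ->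
      vnorm (vsub (F y' u') (F y u)) < eps.

Definition phi {m n} (Jy : vec m -> vec n -> vec m) (Ju : vec m -> vec n -> vec n)
  (S : vec n -> vec m) (Gs : vec n -> R -> mat m n -> Prop)
  (u : vec n) (D : R) (d : vec n) : R :=
  Rsup (fun s => exists G, Gs u D G /\
     s = dot (vadd (mvmul (mtr G) (Jy (S u) u)) (Ju (S u) u)) d).

Definition psi {m n} (Jy : vec m -> vec n -> vec m) (Ju : vec m -> vec n -> vec n)
  (S : vec n -> vec m) (Gs : vec n -> R -> mat m n -> Prop) (u : vec n) (D : R) : R :=
  - Rinf (fun s => exists h : vec n, vnorm h <= 1 /\ s = phi Jy Ju S Gs u D h).

Definition quad {n} (d : vec n) (H : mat n n) : R := dot d (mvmul H d).

(* The sequences (u_k, Delta_k, g_k, H_k, d_k, rho_k) are generated by Algorithm TR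
   (without stopping test; non-termination is stated separately). *)
Definition TR_run {m n} (J : vec m -> vec n -> R)
  (Jy : vec m -> vec n -> vec m) (Ju : vec m -> vec n -> vec n)
  (S : vec n -> vec m) (Gs : vec n -> R -> mat m n -> Prop)
  (Dmin eta1 eta2 beta1 beta2 mu : R)
  (u : nat -> vec n) (Del : nat -> R) (g : nat -> vec n) (H : nat -> mat n n)
  (d : nat -> vec n) (rho : nat -> R) : Prop :=
  let f := compf J S in
  Dmin < Del O /\
  forall k : nat,
    let q := fun dd => f (u k) + dot (g k) dd + / 2 * quad dd (H k) in
    let qt := fun dd => f (u k) + phi Jy Ju S Gs (u k) (Del k) dd + / 2 * quad dd (H k) in
    let psik := psi Jy Ju S Gs (u k) (Del k) in
    clarke_sub f (u k) (g k) /\ symmetric (H k) /\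
    (Dmin <= Del k ->
       vnorm (d k) <= Del k /\
       mu / 2 * vnorm (g k) * min_div (Del k) (vnorm (g k)) (mnorm (H k))
         <= f (u k) - q (d k) /\
       rho k = (f (u k) - f (vadd (u k) (d k))) / (f (u k) - q (d k))) /\
    (Del k < Dmin ->
       vnorm (d k) <= Del k /\
       mu / 2 * psik * min_div (Del k) psik (mnorm (H k)) <= f (u k) - qt (d k) /\
       rho k = (if Rlt_dec (vnorm (g k) * Del k) psik
                then (f (u k) - f (vadd (u k) (d k))) / (f (u k) - qt (d k))
                else 0)) /\
    (rho k <= eta1 -> u (k + 1)%nat = u k /\ Del (k + 1)%nat = beta1 * Del k) /\
    (eta1 < rho k <= eta2 ->
       u (k + 1)%nat = vadd (u k) (d k) /\ Del (k + 1)%nat = Rmax Dmin (Del k)) /\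
    (eta2 < rho k ->
       u (k + 1)%nat = vadd (u k) (d k) /\ Del (k + 1)%nat = Rmax Dmin (beta2 * Del k)).

(* Main.v *)
Require Import Defs.
From Stdlib Require Import Reals Lra Lia Psatz ClassicalEpsilon Classical FunctionalExtensionality.
Open Scope R_scope.

Lemma sumfin_ext n (f g : Fin.t n -> R) : (forall i, f i = g i) -> sumfin n f = sumfin n g.
Proof. induction n; simpl; intros H; [reflexivity|]. rewrite H, (IHn (fun i => f (Fin.FS i)) (fun i => g (Fin.FS i))); auto. Qed.

Lemma sumfin_plus n (f g : Fin.t n -> R) : sumfin n (fun i => f i + g i) = sumfin n f + sumfin n g.
Proof. induction n; simpl; [lra|]. rewrite (IHn (fun i => f (Fin.FS i)) (fun i => g (Fin.FS i))). lra. Qed.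

Lemma sumfin_scal n a (f : Fin.t n -> R) : sumfin n (fun i => a * f i) = a * sumfin n f.
Proof. induction n; simpl; [lra|]. rewrite (IHn (fun i => f (Fin.FS i))). lra. Qed.

Lemma sumfin_zero n : sumfin n (fun _ => 0) = 0.
Proof. induction n; simpl; [lra|]. rewrite IHn; lra. Qed.

Lemma sumfin_le n (f g : Fin.t n -> R) : (forall i, f i <= g i) -> sumfin n f <= sumfin n g.
Proof. induction n; simpl; intros H; [lra|]. specialize (IHn (fun i => f (Fin.FS i)) (fun i => g (Fin.FS i))). pose proof (H Fin.F1). assert (sumfin n (fun i => f (Fin.FS i)) <= sumfin n (fun i => g (Fin.FS i))) by (apply IHn; auto). lra. Qed.

Lemma sumfin_abs n (f : Fin.t n -> R) : Rabs (sumfin n f) <= sumfin n (fun i => Rabs (f i)).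
Proof. induction n; simpl; [rewrite Rabs_R0; lra|]. eapply Rle_trans; [apply Rabs_triang|]. specialize (IHn (fun i => f (Fin.FS i))). lra. Qed.

Lemma sumfin_swap n p (f : Fin.t n -> Fin.t p -> R) :
  sumfin n (fun i => sumfin p (fun j => f i j)) = sumfin p (fun j => sumfin n (fun i => f i j)).
Proof. induction n; simpl. - rewrite sumfin_zero; auto.
  - rewrite (IHn (fun i j => f (Fin.FS i) j)). rewrite <- sumfin_plus. reflexivity. Qed.

Lemma sumfin_nonneg n (f : Fin.t n -> R) : (forall i, 0 <= f i) -> 0 <= sumfin n f.
Proof. intros H. apply Rle_trans with (sumfin n (fun _ => 0)). rewrite sumfin_zero; lra. apply sumfin_le; auto. Qed.

Lemma sumfin_term_le n (f : Fin.t n -> R) i : (forall j, 0 <= f j) -> f i <= sumfin n f.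
Proof. induction n; intros H. - inversion i.
  - revert f H. pattern i. apply Fin.caseS'; intros; simpl.
    + pose proof (sumfin_nonneg n (fun i => f (Fin.FS i)) (fun j => H _)). lra.
    + pose proof (H Fin.F1). pose proof (IHn (fun i => f (Fin.FS i)) p (fun j => H _)). simpl in *. lra. Qed.

Lemma dot_comm n (x y : vec n) : dot x y = dot y x.
Proof. unfold dot. apply sumfin_ext; intros; ring. Qed.
Lemma dot_addl n (x y z : vec n) : dot (vadd x y) z = dot x z + dot y z.
Proof. unfold dot, vadd. rewrite <- sumfin_plus. apply sumfin_ext; intros; ring. Qed.
Lemma dot_addr n (x y z : vec n) : dot z (vadd x y) = dot z x + dot z y.
Proof. rewrite !(dot_comm _ z). apply dot_addl. Qed.
Lemma dot_subl n (x y z : vec n) : dot (vsub x y) z = dot x z - dot y z.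
Proof. unfold dot, vsub. replace (sumfin n (fun i => x i * z i) - sumfin n (fun i => y i * z i)) with (sumfin n (fun i => x i * z i) + (-1) * sumfin n (fun i => y i * z i)) by ring. rewrite <- (sumfin_scal n (-1) (fun i => y i * z i)), <- sumfin_plus. apply sumfin_ext; intros; ring. Qed.
Lemma dot_subr n (x y z : vec n) : dot z (vsub x y) = dot z x - dot z y.
Proof. rewrite !(dot_comm _ z). apply dot_subl. Qed.
Lemma dot_scall n a (x y : vec n) : dot (vscal a x) y = a * dot x y.
Proof. unfold dot, vscal. rewrite <- sumfin_scal. apply sumfin_ext; intros; ring. Qed.
Lemma dot_scalr n a (x y : vec n) : dot y (vscal a x) = a * dot y x.
Proof. rewrite !(dot_comm _ y). apply dot_scall. Qed.
Lemma dot_zerol n (x : vec n) : dot vzero x = 0.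
Proof. unfold dot, vzero. transitivity (sumfin n (fun _ => 0)). apply sumfin_ext; intros; ring. apply sumfin_zero. Qed.
Lemma dot_zeror n (x : vec n) : dot x vzero = 0.
Proof. rewrite dot_comm; apply dot_zerol. Qed.
Lemma dot_pos n (x : vec n) : 0 <= dot x x.
Proof. apply sumfin_nonneg; intros; nra. Qed.

Lemma cs_sq n (x y : vec n) : (dot x y)^2 <= dot x x * dot y y.
Proof.
  assert (Hq : forall t, 0 <= dot x x - 2 * t * dot x y + t^2 * dot y y).
  { intros t. pose proof (dot_pos n (vsub x (vscal t y))).
    rewrite dot_subl, !dot_subr, !dot_scall, !dot_scalr, (dot_comm _ y x) in H. nra. }
  pose proof (dot_pos n x). pose proof (dot_pos n y).
  destruct (Req_dec (dot y y) 0) as [E|E].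
  - rewrite E. destruct (Req_dec (dot x y) 0) as [E2|E2]. rewrite E2; lra.
    specialize (Hq ((dot x x + 1) / (2 * dot x y))). rewrite E in Hq.
    replace (2 * ((dot x x + 1) / (2 * dot x y)) * dot x y) with (dot x x + 1) in Hq by (field; auto). lra.
  - specialize (Hq (dot x y / dot y y)).
    assert (0 < dot y y) by lra.
    replace (dot x x - 2 * (dot x y / dot y y) * dot x y + (dot x y / dot y y) ^ 2 * dot y y)
      with ((dot x x * dot y y - (dot x y)^2) / dot y y) in Hq by (field; lra).
    assert (0 <= dot x x * dot y y - (dot x y)^2).
    { apply Rmult_le_reg_r with (/ dot y y). apply Rinv_0_lt_compat; lra. rewrite Rmult_0_l. exact Hq. }
    lra.
Qed.

Lemma vnorm_nonneg n (x : vec n) : 0 <= vnorm x.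
Proof. apply sqrt_pos. Qed.
Lemma vnorm_sq n (x : vec n) : vnorm x * vnorm x = dot x x.
Proof. unfold vnorm. apply sqrt_sqrt, dot_pos. Qed.

Lemma cauchy_schwarz n (x y : vec n) : Rabs (dot x y) <= vnorm x * vnorm y.
Proof.
  pose proof (cs_sq n x y). pose proof (vnorm_sq n x). pose proof (vnorm_sq n y).
  pose proof (vnorm_nonneg n x). pose proof (vnorm_nonneg n y).
  apply Rsqr_incr_0_var. unfold Rsqr. rewrite <- Rabs_mult, Rabs_pos_eq by nra. nra. nra.
Qed.
Lemma cs_le n (x y : vec n) : dot x y <= vnorm x * vnorm y.
Proof. pose proof (cauchy_schwarz n x y). pose proof (Rle_abs (dot x y)). lra. Qed.
Lemma cs_ge n (x y : vec n) : - (vnorm x * vnorm y) <= dot x y.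
Proof. pose proof (cauchy_schwarz n x y). pose proof (Rle_abs (- dot x y)). rewrite Rabs_Ropp in H0. lra. Qed.

Lemma vnorm_le_sq n (x : vec n) c : 0 <= c -> dot x x <= c * c -> vnorm x <= c.
Proof. intros. pose proof (vnorm_sq n x). pose proof (vnorm_nonneg n x). nra. Qed.

Lemma vnorm_triang n (x y : vec n) : vnorm (vadd x y) <= vnorm x + vnorm y.
Proof.
  apply vnorm_le_sq. pose proof (vnorm_nonneg n x); pose proof (vnorm_nonneg n y); lra.
  rewrite dot_addl, !dot_addr. pose proof (cs_le n x y). rewrite (dot_comm _ y x).
  rewrite <- (vnorm_sq n x), <- (vnorm_sq n y). nra.
Qed.

Lemma vnorm_scal n a (x : vec n) : vnorm (vscal a x) = Rabs a * vnorm x.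
Proof.
  unfold vnorm. rewrite dot_scall, dot_scalr. rewrite <- Rmult_assoc.
  rewrite sqrt_mult_alt. f_equal. rewrite <- sqrt_Rsqr_abs. unfold Rsqr. auto. nra.
Qed.

Lemma vnorm_zero n : vnorm (@vzero n) = 0.
Proof. unfold vnorm. rewrite dot_zerol. apply sqrt_0. Qed.

Lemma vsub_eq n (x y : vec n) : vsub x y = vadd x (vscal (-1) y).
Proof. apply functional_extensionality; intros; unfold vsub, vadd, vscal; ring. Qed.

Lemma vnorm_opp n (x : vec n) : vnorm (vscal (-1) x) = vnorm x.
Proof. rewrite vnorm_scal. rewrite Rabs_left by lra; ring. Qed.

Lemma vnorm_sub_triang n (x y : vec n) : vnorm (vsub x y) <= vnorm x + vnorm y.
Proof. rewrite vsub_eq. rewrite <- (vnorm_opp n y). apply vnorm_triang. Qed.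

Lemma vnorm_sub_sym n (x y : vec n) : vnorm (vsub x y) = vnorm (vsub y x).
Proof. replace (vsub y x) with (vscal (-1) (vsub x y)). rewrite vnorm_opp; auto.
  apply functional_extensionality; intros; unfold vsub, vscal; ring. Qed.

Lemma vnorm_dist_triang n (x y z : vec n) : vnorm (vsub x z) <= vnorm (vsub x y) + vnorm (vsub y z).
Proof. replace (vsub x z) with (vadd (vsub x y) (vsub y z)). apply vnorm_triang.
  apply functional_extensionality; intros; unfold vsub, vadd; ring. Qed.

Lemma vnorm_comp_le n (x : vec n) i : Rabs (x i) <= vnorm x.
Proof.
  apply Rsqr_incr_0_var. unfold Rsqr. rewrite vnorm_sq. rewrite <- Rabs_mult, Rabs_pos_eq by nra.
  unfold dot. apply (sumfin_term_le n (fun i => x i * x i)). intros; nra. apply vnorm_nonneg.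
Qed.

Lemma vnorm_le_sum n (x : vec n) : vnorm x <= sumfin n (fun i => Rabs (x i)).
Proof.
  apply vnorm_le_sq. apply sumfin_nonneg; intros; apply Rabs_pos.
  unfold dot. induction n; simpl. lra.
  specialize (IHn (fun i => x (Fin.FS i))). simpl in IHn.
  pose proof (sumfin_nonneg n (fun i => Rabs (x (Fin.FS i))) (fun _ => Rabs_pos _)).
  pose proof (Rabs_pos (x Fin.F1)).
  assert (x Fin.F1 * x Fin.F1 = Rabs (x Fin.F1) * Rabs (x Fin.F1)) by (rewrite <- Rabs_mult, Rabs_pos_eq; nra).
  nra.
Qed.

Lemma convex_lt (X Y R t : R) : 0 <= t <= 1 -> X < R -> Y < R -> (1 - t) * X + t * Y < R.
Proof. intros Ht HX HY. destruct (Rle_lt_or_eq_dec t 1) as [Hl|He]; [lra| |].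
  - assert ((1 - t) * X < (1 - t) * R) by (apply Rmult_lt_compat_l; lra).
    assert (t * Y <= t * R) by (apply Rmult_le_compat_l; lra). lra.
  - subst t. lra. Qed.

Lemma Rsup_lub (E : R -> Prop) : (exists x, E x) -> (exists c, forall x, E x -> x <= c) -> is_lub E (Rsup E).
Proof.
  intros [x Hx] [c Hc]. unfold Rsup. apply epsilon_spec.
  destruct (completeness E) as [s Hs]. exists c; intros y Hy; apply Hc; auto. exists x; auto. exists s; auto.
Qed.

Lemma Rsup_ub (E : R -> Prop) c : (exists x, E x) -> (forall x, E x -> x <= c) -> forall x, E x -> x <= Rsup E.
Proof. intros H1 H2 x Hx. destruct (Rsup_lub E H1 (ex_intro _ c H2)) as [H _]. apply H; auto. Qed.

Lemma Rsup_le (E : R -> Prop) c : (exists x, E x) -> (forall x, E x -> x <= c) -> Rsup E <= c.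
Proof. intros H1 H2. destruct (Rsup_lub E H1 (ex_intro _ c H2)) as [_ H]. apply H. intros y Hy; auto. Qed.

Lemma Rinf_le (E : R -> Prop) c : (exists x, E x) -> (forall x, E x -> c <= x) -> forall x, E x -> Rinf E <= x.
Proof. intros H1 H2 x Hx. unfold Rinf.
  assert (- x <= Rsup (fun y => E (- y))).
  { apply (Rsup_ub _ (- c)). exists (- x); rewrite Ropp_involutive; auto.
    intros y Hy. specialize (H2 _ Hy). lra. rewrite Ropp_involutive; auto. }
  lra. Qed.

Lemma mvmul_scal m n (A : mat m n) a h : mvmul A (vscal a h) = vscal a (mvmul A h).
Proof. apply functional_extensionality; intros i. unfold mvmul, vscal. rewrite <- sumfin_scal. apply sumfin_ext; intros; ring. Qed.
Lemma mvmul_add m n (A : mat m n) h k : mvmul A (vadd h k) = vadd (mvmul A h) (mvmul A k).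
Proof. apply functional_extensionality; intros i. unfold mvmul, vadd. rewrite <- sumfin_plus. apply sumfin_ext; intros; ring. Qed.
Lemma mvmul_msub m n (A B : mat m n) h : mvmul (msub A B) h = vsub (mvmul A h) (mvmul B h).
Proof. apply functional_extensionality; intros i. unfold mvmul, vsub, msub.
  replace (sumfin n (fun j => A i j * h j) - sumfin n (fun j => B i j * h j)) with (sumfin n (fun j => A i j * h j) + (-1) * sumfin n (fun j => B i j * h j)) by ring.
  rewrite <- sumfin_scal, <- sumfin_plus. apply sumfin_ext; intros; ring. Qed.
Lemma mvmul_zero m n (A : mat m n) : mvmul A vzero = vzero.
Proof. apply functional_extensionality; intros i. unfold mvmul, vzero. transitivity (sumfin n (fun _ => 0)). apply sumfin_ext; intros; ring. apply sumfin_zero. Qed.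

Lemma dot_mtr m n (G : mat m n) a d : dot (mvmul (mtr G) a) d = dot a (mvmul G d).
Proof. unfold dot, mvmul, mtr.
  transitivity (sumfin n (fun i => sumfin m (fun j => G j i * a j * d i))).
  apply sumfin_ext; intros. rewrite Rmult_comm, <- sumfin_scal. apply sumfin_ext; intros; ring.
  rewrite sumfin_swap. apply sumfin_ext; intros. rewrite <- sumfin_scal. apply sumfin_ext; intros; ring. Qed.

Lemma mvmul_bound m n (A : mat m n) : exists C, 0 <= C /\ forall h, vnorm (mvmul A h) <= C * vnorm h.
Proof.
  exists (sumfin m (fun i => sumfin n (fun j => Rabs (A i j)))). split.
  apply sumfin_nonneg; intros; apply sumfin_nonneg; intros; apply Rabs_pos.
  intros h. eapply Rle_trans. apply vnorm_le_sum. rewrite Rmult_comm, <- sumfin_scal. apply sumfin_le; intros i.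
  unfold mvmul. eapply Rle_trans. apply sumfin_abs. rewrite <- sumfin_scal. apply sumfin_le; intros j.
  rewrite Rabs_mult. pose proof (vnorm_comp_le n h j). pose proof (Rabs_pos (A i j)). nra.
Qed.

Lemma mnorm_set_ne m n (A : mat m n) : exists s, exists h : vec n, vnorm h <= 1 /\ s = vnorm (mvmul A h).
Proof. exists (vnorm (mvmul A vzero)). exists vzero. rewrite vnorm_zero; split; auto; lra. Qed.

Lemma mnorm_set_bd m n (A : mat m n) : exists c, forall s, (exists h : vec n, vnorm h <= 1 /\ s = vnorm (mvmul A h)) -> s <= c.
Proof. destruct (mvmul_bound m n A) as [C [HC1 HC]]. exists C. intros s [h [Hh ->]]. specialize (HC h). nra. Qed.

Lemma mnorm_nonneg m n (A : mat m n) : 0 <= mnorm A.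
Proof. destruct (mnorm_set_bd m n A) as [c Hc]. unfold mnorm. apply Rle_trans with (vnorm (mvmul A vzero)).
  apply vnorm_nonneg. apply (Rsup_ub _ c (mnorm_set_ne m n A) Hc). exists vzero. rewrite vnorm_zero; split; auto; lra. Qed.

Lemma vnorm_eq0 n (h : vec n) : vnorm h = 0 -> h = vzero.
Proof. intros H. apply functional_extensionality; intros i. pose proof (vnorm_comp_le n h i). unfold vzero.
  rewrite H in H0. pose proof (Rabs_pos (h i)). destruct (Req_dec (h i) 0); auto. pose proof (Rabs_pos_lt _ H2). lra. Qed.

Lemma mnorm_spec m n (A : mat m n) h : vnorm (mvmul A h) <= mnorm A * vnorm h.
Proof.
  destruct (mnorm_set_bd m n A) as [c Hc].
  destruct (Req_dec (vnorm h) 0) as [E|E].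
  - apply vnorm_eq0 in E. subst h. rewrite mvmul_zero, !vnorm_zero. rewrite Rmult_0_r; lra.
  - pose proof (vnorm_nonneg n h). assert (Hp : 0 < vnorm h) by lra.
    assert (vnorm (mvmul A (vscal (/ vnorm h) h)) <= mnorm A).
    { unfold mnorm. apply (Rsup_ub _ c (mnorm_set_ne m n A) Hc). exists (vscal (/ vnorm h) h). split; auto.
      rewrite vnorm_scal, Rabs_pos_eq. rewrite Rinv_l; lra. left; apply Rinv_0_lt_compat; auto. }
    rewrite mvmul_scal, vnorm_scal, Rabs_pos_eq in H0 by (left; apply Rinv_0_lt_compat; auto).
    apply Rmult_le_compat_l with (r := vnorm h) in H0; [|lra].
    rewrite <- Rmult_assoc, Rinv_r in H0; lra.
Qed.

Lemma mnorm_le m n (A : mat m n) c : (forall h, vnorm h <= 1 -> vnorm (mvmul A h) <= c) -> mnorm A <= c.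
Proof. intros H. unfold mnorm. apply Rsup_le. apply mnorm_set_ne. intros s [h [Hh ->]]. auto. Qed.

Lemma quad_bound n (d : vec n) (H : mat n n) : Rabs (quad d H) <= mnorm H * (vnorm d * vnorm d).
Proof. unfold quad. eapply Rle_trans. apply cauchy_schwarz. pose proof (mnorm_spec n n H d).
  pose proof (vnorm_nonneg n d). nra. Qed.

Lemma dini_mv_eps (phi : R -> R) (M e : R) : 0 < e ->
  (forall t, 0 <= t <= 1 -> forall eps, 0 < eps -> exists del, 0 < del /\
      forall s, 0 <= s <= 1 -> Rabs (s - t) < del -> Rabs (phi s - phi t) < eps) ->
  (forall t, 0 <= t < 1 -> exists del, 0 < del /\
      forall s, 0 < s < del -> phi (t + s) - phi t <= (M + e) * s) ->
  phi 1 - phi 0 <= M + e.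
Proof.
  intros He Hc Hd.
  set (E := fun t => 0 <= t <= 1 /\ forall s, 0 <= s <= t -> phi s - phi 0 <= (M + e) * s).
  assert (HE0 : E 0). { split. lra. intros s Hs. replace s with 0 by lra. lra. }
  assert (Hb : bound E). { exists 1. intros t [Ht _]. lra. }
  destruct (completeness E Hb (ex_intro _ 0 HE0)) as [T [HT1 HT2]].
  assert (T0 : 0 <= T) by (apply HT1; auto).
  assert (T1 : T <= 1). { apply HT2. intros t [Ht _]; lra. }
  assert (Hlt : forall s, 0 <= s < T -> phi s - phi 0 <= (M + e) * s).
  { intros s Hs. destruct (classic (exists t, E t /\ s <= t)) as [[t [[_ Ht] Hst]]|Hn].
    - apply Ht; lra.
    - exfalso. assert (T <= s). { apply HT2. intros t Et. destruct (Rle_dec t s); auto. exfalso; apply Hn. exists t; split; auto; lra. } lra. }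
  assert (HTT : phi T - phi 0 <= (M + e) * T).
  { destruct (Req_dec T 0) as [Z|Z]. { rewrite Z. lra. }
    apply Rnot_lt_le. intros Hgt. set (gap := phi T - phi 0 - (M + e) * T).
    destruct (Hc T (conj T0 T1) (gap / 2)) as [del [Hdel Hdel2]]. unfold gap; lra.
    set (k := Rabs (M + e) + 1).
    set (s := Rmax 0 (T - Rmin (del / 2) (gap / (4 * k)))).
    assert (Hk : 0 < k) by (unfold k; pose proof (Rabs_pos (M+e)); lra).
    assert (Hg4 : 0 < gap / (4 * k)). { apply Rdiv_lt_0_compat. unfold gap; lra. lra. }
    assert (Hmin1 : Rmin (del / 2) (gap / (4 * k)) <= del / 2) by apply Rmin_l.
    assert (Hmin2 : Rmin (del / 2) (gap / (4 * k)) <= gap / (4 * k)) by apply Rmin_r.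
    assert (Hmin0 : 0 < Rmin (del / 2) (gap / (4 * k))) by (apply Rmin_glb_lt; lra).
    assert (Hs0 : 0 <= s) by (unfold s; apply Rmax_l).
    assert (HsT : s < T). { unfold s. apply Rmax_lub_lt; lra. }
    assert (HsT2 : T - s <= gap / (4 * k)). { unfold s. pose proof (Rmax_r 0 (T - Rmin (del / 2) (gap / (4 * k)))). lra. }
    assert (HsT3 : T - s < del). { unfold s. pose proof (Rmax_r 0 (T - Rmin (del / 2) (gap / (4 * k)))). lra. }
    specialize (Hdel2 s ltac:(lra)). rewrite Rabs_minus_sym, Rabs_pos_eq in Hdel2 by lra.
    specialize (Hdel2 HsT3). specialize (Hlt s (conj Hs0 HsT)).
    assert (Habs : - (M + e) * (T - s) <= k * (gap / (4 * k))).
    { apply Rle_trans with (Rabs (- (M + e)) * (T - s)). apply Rmult_le_compat_r. lra. apply Rle_abs. rewrite Rabs_Ropp.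
      apply Rmult_le_compat. apply Rabs_pos. lra. unfold k; lra. auto. }
    replace (k * (gap / (4 * k))) with (gap / 4) in Habs by (field; lra).
    rewrite Rabs_minus_sym in Hdel2. pose proof (Rle_abs (phi T - phi s)). unfold gap in *. lra. }
  assert (T = 1).
  { destruct (Req_dec T 1) as [|Hne]; auto. exfalso.
    assert (Tl : T < 1) by (destruct T1; auto; contradiction).
    destruct (Hd T (conj T0 Tl)) as [del [Hdel Hdel2]].
    set (s' := Rmin (del / 2) (1 - T)).
    assert (0 < s') by (apply Rmin_glb_lt; lra).
    assert (s' <= del / 2) by apply Rmin_l. assert (s' <= 1 - T) by apply Rmin_r.
    assert (HE' : E (T + s')).
    { split. lra. intros s Hs. destruct (Rlt_le_dec s T). apply Hlt; lra.
      destruct (Req_dec s T) as [->|]. auto.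
      specialize (Hdel2 (s - T) ltac:(lra)). replace (T + (s - T)) with s in Hdel2 by ring. nra. }
    specialize (HT1 _ HE'). lra. }
  subst T. lra.
Qed.

Lemma dini_mv (phi : R -> R) (M : R) :
  (forall t, 0 <= t <= 1 -> forall eps, 0 < eps -> exists del, 0 < del /\
      forall s, 0 <= s <= 1 -> Rabs (s - t) < del -> Rabs (phi s - phi t) < eps) ->
  (forall t, 0 <= t < 1 -> forall e, 0 < e -> exists del, 0 < del /\
      forall s, 0 < s < del -> phi (t + s) - phi t <= (M + e) * s) ->
  phi 1 - phi 0 <= M.
Proof.
  intros Hc Hd. apply Rnot_lt_le. intros Hgt.
  set (e := (phi 1 - phi 0 - M) / 2).
  assert (0 < e) by (unfold e; lra).
  pose proof (dini_mv_eps phi M e H Hc (fun t Ht => Hd t Ht e H)). unfold e in H0. lra.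
Qed.

Lemma vadd_scal_comb n (y a : vec n) t s : vadd (vadd y (vscal t a)) (vscal s a) = vadd y (vscal (t + s) a).
Proof. apply functional_extensionality; intros; unfold vadd, vscal; ring. Qed.

Lemma J_step m n (J : vec m -> vec n -> R) Jy Ju (HJ : has_gradients J Jy Ju) y u a b :
  forall eps, 0 < eps -> exists del, 0 < del /\ forall s, Rabs s < del ->
   Rabs (J (vadd y (vscal s a)) (vadd u (vscal s b)) - J y u - s * (dot (Jy y u) a + dot (Ju y u) b))
     <= eps * Rabs s.
Proof.
  intros eps He. set (k := vnorm a + vnorm b + 1).
  assert (Hk : 0 < k) by (unfold k; pose proof (vnorm_nonneg m a); pose proof (vnorm_nonneg n b); lra).
  destruct (HJ y u (eps / k)) as [del [Hdel H]]. apply Rdiv_lt_0_compat; lra.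
  exists (del / k). split. apply Rdiv_lt_0_compat; lra. intros s Hs.
  assert (Hn : vnorm (vscal s a) + vnorm (vscal s b) = Rabs s * (vnorm a + vnorm b)) by (rewrite !vnorm_scal; ring).
  assert (Hlt : vnorm (vscal s a) + vnorm (vscal s b) < del).
  { rewrite Hn. pose proof (Rabs_pos s). apply Rle_lt_trans with (Rabs s * k). unfold k. nra.
    apply Rmult_lt_reg_r with (/ k). apply Rinv_0_lt_compat; auto. rewrite Rmult_assoc, Rinv_r by lra. lra. }
  specialize (H _ _ Hlt). rewrite !dot_scalr, Hn in H.
  replace (J (vadd y (vscal s a)) (vadd u (vscal s b)) - J y u - s * (dot (Jy y u) a + dot (Ju y u) b))
    with (J (vadd y (vscal s a)) (vadd u (vscal s b)) - J y u - s * dot (Jy y u) a - s * dot (Ju y u) b) by ring.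
  eapply Rle_trans. apply H.
  replace (eps / k * (Rabs s * (vnorm a + vnorm b))) with (eps * Rabs s * ((vnorm a + vnorm b) / k)) by (field; lra).
  assert ((vnorm a + vnorm b) / k <= 1). { apply Rmult_le_reg_r with k; auto. unfold Rdiv. rewrite Rmult_assoc, Rinv_l by lra. unfold k; lra. }
  pose proof (Rabs_pos s). rewrite <- (Rmult_1_r (eps * Rabs s)) at 2. apply Rmult_le_compat_l; auto. apply Rmult_le_pos; lra.
Qed.

Lemma J_mv m n (J : vec m -> vec n -> R) Jy Ju (HJ : has_gradients J Jy Ju) y u a b M :
  (forall t, 0 <= t <= 1 -> dot (Jy (vadd y (vscal t a)) (vadd u (vscal t b))) a
                          + dot (Ju (vadd y (vscal t a)) (vadd u (vscal t b))) b <= M) ->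
  J (vadd y a) (vadd u b) - J y u <= M.
Proof.
  intros HM. set (psi := fun t => J (vadd y (vscal t a)) (vadd u (vscal t b))).
  assert (E1 : J (vadd y a) (vadd u b) = psi 1).
  { unfold psi. f_equal; apply functional_extensionality; intros; unfold vadd, vscal; ring. }
  assert (E0 : J y u = psi 0).
  { unfold psi. f_equal; apply functional_extensionality; intros; unfold vadd, vscal; ring. }
  rewrite E1, E0. apply dini_mv.
  - intros t Ht eps He.
    set (c := Rabs (dot (Jy (vadd y (vscal t a)) (vadd u (vscal t b))) a + dot (Ju (vadd y (vscal t a)) (vadd u (vscal t b))) b) + 1).
    assert (Hc : 0 < c) by (unfold c; pose proof (Rabs_pos (dot (Jy (vadd y (vscal t a)) (vadd u (vscal t b))) a + dot (Ju (vadd y (vscal t a)) (vadd u (vscal t b))) b)); lra).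
    destruct (J_step m n J Jy Ju HJ (vadd y (vscal t a)) (vadd u (vscal t b)) a b 1 ltac:(lra)) as [del [Hdel H]].
    exists (Rmin del (eps / (c + 1))). split. apply Rmin_glb_lt; auto. apply Rdiv_lt_0_compat; lra.
    intros s Hs Hst. pose proof (Rmin_l del (eps / (c + 1))). pose proof (Rmin_r del (eps / (c + 1))).
    specialize (H (s - t) ltac:(lra)). unfold psi. rewrite !vadd_scal_comb in H.
    replace (t + (s - t)) with s in H by ring.
    set (D := dot (Jy (vadd y (vscal t a)) (vadd u (vscal t b))) a + dot (Ju (vadd y (vscal t a)) (vadd u (vscal t b))) b) in *.
    set (X := J (vadd y (vscal s a)) (vadd u (vscal s b)) - J (vadd y (vscal t a)) (vadd u (vscal t b))) in *.
    assert (Rabs X <= Rabs (s - t) * c).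
    { replace X with ((X - (s - t) * D) + (s - t) * D) by ring. eapply Rle_trans. apply Rabs_triang.
      rewrite Rabs_mult. unfold c. fold D. pose proof (Rabs_pos (s - t)). nra. }
    assert (Rabs (s - t) * c < eps).
    { apply Rle_lt_trans with (eps / (c+1) * c). apply Rmult_le_compat_r; lra.
      replace (eps / (c + 1) * c) with (eps - eps / (c + 1)) by (field; lra).
      assert (0 < eps / (c + 1)) by (apply Rdiv_lt_0_compat; lra). lra. }
    lra.
  - intros t Ht e He.
    destruct (J_step m n J Jy Ju HJ (vadd y (vscal t a)) (vadd u (vscal t b)) a b e He) as [del [Hdel H]].
    exists del. split; auto. intros s Hs. specialize (H s ltac:(rewrite Rabs_pos_eq; lra)).
    rewrite !vadd_scal_comb in H. unfold psi. specialize (HM t ltac:(lra)).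
    rewrite (Rabs_pos_eq s) in H by lra.
    pose proof (Rle_abs (J (vadd y (vscal (t + s) a)) (vadd u (vscal (t + s) b)) - J (vadd y (vscal t a)) (vadd u (vscal t b)) -
        s * (dot (Jy (vadd y (vscal t a)) (vadd u (vscal t b))) a + dot (Ju (vadd y (vscal t a)) (vadd u (vscal t b))) b))).
    nra.
Qed.

Lemma S_cont m n (S : vec n -> vec m) (HSlip : loc_lipschitz S) x :
  forall eps, 0 < eps -> exists del, 0 < del /\ forall y, vnorm (vsub y x) < del -> vnorm (vsub (S y) (S x)) < eps.
Proof.
  intros eps He. destruct (HSlip x) as [r [L [Hr HL]]].
  set (L' := Rabs L + 1).
  exists (Rmin r (eps / L')). split. apply Rmin_glb_lt; auto. apply Rdiv_lt_0_compat; auto. unfold L'; pose proof (Rabs_pos L); lra.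
  intros y Hy. pose proof (Rmin_l r (eps / L')). pose proof (Rmin_r r (eps / L')).
  assert (HxL : vnorm (vsub x x) <= r). { replace (vsub x x) with (@vzero n). rewrite vnorm_zero; lra. apply functional_extensionality; intros; unfold vsub, vzero; ring. }
  specialize (HL y x ltac:(lra) HxL). pose proof (vnorm_nonneg n (vsub y x)).
  assert (L * vnorm (vsub y x) <= Rabs L * vnorm (vsub y x)) by (apply Rmult_le_compat_r; auto; apply Rle_abs).
  assert (Rabs L * vnorm (vsub y x) < eps).
  { assert (0 < L') by (unfold L'; pose proof (Rabs_pos L); lra).
    apply Rle_lt_trans with (L' * vnorm (vsub y x)). unfold L'; nra.
    apply Rmult_lt_reg_r with (/ L'). apply Rinv_0_lt_compat; auto.
    replace (L' * vnorm (vsub y x) * / L') with (vnorm (vsub y x)) by (field; lra). unfold Rdiv in *. lra. }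
  lra.
Qed.

Lemma vsub_vadd_l n (u d : vec n) : vsub (vadd u d) u = d.
Proof. apply functional_extensionality; intros; unfold vsub, vadd; ring. Qed.

Lemma S_mv m n (S : vec n -> vec m) (HSlip : loc_lipschitz S)
  (HD : forall u h, exists G, bouligand S u G /\ dir_deriv S u h (mvmul G h)) u d a M :
  (forall t, 0 <= t <= 1 -> forall G, bouligand S (vadd u (vscal t d)) G -> dot a (mvmul G d) <= M) ->
  dot a (S (vadd u d)) - dot a (S u) <= M.
Proof.
  intros HM. set (ph := fun t => dot a (S (vadd u (vscal t d)))).
  assert (E1 : dot a (S (vadd u d)) = ph 1).
  { unfold ph. do 3 f_equal; apply functional_extensionality; intros; unfold vadd, vscal; ring. }
  assert (E0 : dot a (S u) = ph 0).
  { unfold ph. do 3 f_equal; apply functional_extensionality; intros; unfold vadd, vscal; ring. }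
  rewrite E1, E0. apply dini_mv.
  - intros t Ht eps He.
    destruct (S_cont m n S HSlip (vadd u (vscal t d)) (eps / (vnorm a + 1))) as [del [Hdel H]].
    apply Rdiv_lt_0_compat; auto; pose proof (vnorm_nonneg m a); lra.
    exists (del / (vnorm d + 1)). split. apply Rdiv_lt_0_compat; auto; pose proof (vnorm_nonneg n d); lra.
    intros s Hs Hst. unfold ph.
    replace (vadd u (vscal s d)) with (vadd (vadd u (vscal t d)) (vscal (s - t) d)) by
      (apply functional_extensionality; intros; unfold vadd, vscal; ring).
    rewrite <- dot_subr. eapply Rle_lt_trans. apply cauchy_schwarz.
    assert (Hn : vnorm (vsub (vadd (vadd u (vscal t d)) (vscal (s - t) d)) (vadd u (vscal t d))) < del).
    { rewrite vsub_vadd_l, vnorm_scal. pose proof (vnorm_nonneg n d). pose proof (Rabs_pos (s - t)).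
      apply Rle_lt_trans with (Rabs (s - t) * (vnorm d + 1)). nra.
      apply Rmult_lt_reg_r with (/ (vnorm d + 1)). apply Rinv_0_lt_compat; lra.
      replace (Rabs (s - t) * (vnorm d + 1) * / (vnorm d + 1)) with (Rabs (s - t)) by (field; lra). exact Hst. }
    specialize (H _ Hn). pose proof (vnorm_nonneg m a).
    apply Rle_lt_trans with (vnorm a * (eps / (vnorm a + 1))).
    apply Rmult_le_compat_l; lra.
    replace (vnorm a * (eps / (vnorm a + 1))) with (eps - eps / (vnorm a + 1)) by (field; lra).
    assert (0 < eps / (vnorm a + 1)) by (apply Rdiv_lt_0_compat; lra). lra.
  - intros t Ht e He. destruct (HD (vadd u (vscal t d)) d) as [G [HB Hdir]].
    specialize (HM t ltac:(lra) G HB).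
    destruct (Hdir (e / (vnorm a + 1))) as [del [Hdel H]]. apply Rdiv_lt_0_compat; auto; pose proof (vnorm_nonneg m a); lra.
    exists del. split; auto. intros s Hs. specialize (H s Hs). unfold ph.
    set (w := vsub (vscal (/ s) (vsub (S (vadd (vadd u (vscal t d)) (vscal s d))) (S (vadd u (vscal t d))))) (mvmul G d)) in H.
    assert (Hdec : vsub (S (vadd u (vscal (t + s) d))) (S (vadd u (vscal t d))) = vscal s (vadd (mvmul G d) w)).
    { unfold w. rewrite <- vadd_scal_comb. apply functional_extensionality; intros i. unfold vscal, vadd, vsub.
      field. lra. }
    rewrite <- dot_subr, Hdec, dot_scalr, dot_addr.
    pose proof (cs_le m a w). pose proof (vnorm_nonneg m a).
    assert (vnorm a * vnorm w <= e).
    { apply Rle_trans with (vnorm a * (e / (vnorm a + 1))). apply Rmult_le_compat_l; lra.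
      replace (vnorm a * (e / (vnorm a + 1))) with (e - e / (vnorm a + 1)) by (field; lra).
      assert (0 < e / (vnorm a + 1)) by (apply Rdiv_lt_0_compat; lra). lra. }
    nra.
Qed.

Lemma seg_in n (y a Y0 : vec n) t : 0 <= t <= 1 ->
  vnorm (vsub (vadd y (vscal t a)) Y0) <= (1 - t) * vnorm (vsub y Y0) + t * vnorm (vsub (vadd y a) Y0).
Proof.
  intros Ht. replace (vsub (vadd y (vscal t a)) Y0) with (vadd (vscal (1 - t) (vsub y Y0)) (vscal t (vsub (vadd y a) Y0))).
  eapply Rle_trans. apply vnorm_triang. rewrite !vnorm_scal, !Rabs_pos_eq by lra. lra.
  apply functional_extensionality; intros; unfold vadd, vsub, vscal; ring.
Qed.

Lemma J_local m n (J : vec m -> vec n -> R) Jy Ju (HJ : has_gradients J Jy Ju)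
  (HJy : continuous2 Jy) (HJu : continuous2 Ju) Y0 U0 :
  forall eps, 0 < eps -> exists del, 0 < del /\ forall y u a b,
    vnorm (vsub y Y0) + vnorm (vsub u U0) < del ->
    vnorm (vsub (vadd y a) Y0) + vnorm (vsub (vadd u b) U0) < del ->
    Rabs (J (vadd y a) (vadd u b) - J y u - dot (Jy Y0 U0) a - dot (Ju Y0 U0) b) <= eps * (vnorm a + vnorm b).
Proof.
  intros eps He. destruct (HJy Y0 U0 eps He) as [d1 [Hd1 H1]]. destruct (HJu Y0 U0 eps He) as [d2 [Hd2 H2]].
  exists (Rmin d1 d2). split. apply Rmin_glb_lt; auto.
  pose proof (Rmin_l d1 d2). pose proof (Rmin_r d1 d2).
  assert (Hseg : forall y u a b, vnorm (vsub y Y0) + vnorm (vsub u U0) < Rmin d1 d2 ->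
    vnorm (vsub (vadd y a) Y0) + vnorm (vsub (vadd u b) U0) < Rmin d1 d2 ->
    J (vadd y a) (vadd u b) - J y u <= dot (Jy Y0 U0) a + dot (Ju Y0 U0) b + eps * (vnorm a + vnorm b)).
  { intros y u a b Hp Hq. apply (J_mv m n J Jy Ju HJ). intros t Ht.
    pose proof (seg_in m y a Y0 t Ht). pose proof (seg_in n u b U0 t Ht).
    pose proof (convex_lt _ _ _ t Ht Hp Hq).
    assert (Hin : vnorm (vsub (vadd y (vscal t a)) Y0) + vnorm (vsub (vadd u (vscal t b)) U0) < Rmin d1 d2) by lra.
    specialize (H1 (vadd y (vscal t a)) (vadd u (vscal t b)) ltac:(lra)). specialize (H2 (vadd y (vscal t a)) (vadd u (vscal t b)) ltac:(lra)).
    pose proof (cs_le m (vsub (Jy (vadd y (vscal t a)) (vadd u (vscal t b))) (Jy Y0 U0)) a).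
    pose proof (cs_le n (vsub (Ju (vadd y (vscal t a)) (vadd u (vscal t b))) (Ju Y0 U0)) b).
    match goal with | [ A : dot (vsub _ _) a <= _, B : dot (vsub _ _) b <= _ |- _ ] => rewrite dot_subl in A, B end. pose proof (vnorm_nonneg m a). pose proof (vnorm_nonneg n b). nra. }
  intros y u a b Hp Hq. apply Rabs_le. split.
  - specialize (Hseg (vadd y a) (vadd u b) (vscal (-1) a) (vscal (-1) b) Hq).
    replace (vadd (vadd y a) (vscal (-1) a)) with y in Hseg by (apply functional_extensionality; intros; unfold vadd, vscal; ring).
    replace (vadd (vadd u b) (vscal (-1) b)) with u in Hseg by (apply functional_extensionality; intros; unfold vadd, vscal; ring).
    specialize (Hseg Hp). rewrite !dot_scalr, !vnorm_opp in Hseg. lra.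
  - specialize (Hseg y u a b Hp Hq). lra.
Qed.

Lemma nonstat_dir n (f : vec n -> R) ub : ~ clarke_sub f ub vzero ->
  exists h eps del, 0 < eps /\ 0 < del /\ forall y t, vnorm (vsub y ub) < del -> 0 < t < del ->
    (f (vadd y (vscal t h)) - f y) / t <= - eps.
Proof.
  intros Hn. unfold clarke_sub in Hn.
  apply not_all_ex_not in Hn as [h Hn]. apply not_all_ex_not in Hn as [eps Hn].
  apply not_all_ex_not in Hn as [del Hn].
  destruct (classic (0 < eps)) as [He|He]; [|exfalso; apply Hn; intros; contradiction].
  destruct (classic (0 < del)) as [Hd|Hd]; [|exfalso; apply Hn; intros; contradiction].
  exists h, eps, del. split; auto. split; auto. intros y t Hy Ht.
  apply Rnot_lt_le. intros Hq. apply Hn. intros _ _. exists y, t. split; auto. split; auto.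
  rewrite dot_zerol. lra.
Qed.

Lemma g_lower n (f : vec n -> R) ub h eps del :
  0 < eps -> 0 < del ->
  (forall y t, vnorm (vsub y ub) < del -> 0 < t < del -> (f (vadd y (vscal t h)) - f y) / t <= - eps) ->
  forall x g, vnorm (vsub x ub) < del / 2 -> clarke_sub f x g -> dot g h <= - eps / 2.
Proof.
  intros He Hd H x g Hx Hg. destruct (Hg h (eps / 2) (del / 2) ltac:(lra) ltac:(lra)) as [y [t [Hy [Ht Hq]]]].
  assert (vnorm (vsub y ub) < del). { pose proof (vnorm_dist_triang n y x ub). lra. }
  specialize (H y t H0 ltac:(lra)). lra.
Qed.

Lemma vsub_self n (x : vec n) : vsub x x = vzero.
Proof. apply functional_extensionality; intros; unfold vsub, vzero; ring. Qed.

Lemma vadd_vsub n (y z : vec n) : vadd y (vsub z y) = z.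
Proof. apply functional_extensionality; intros; unfold vsub, vadd; ring. Qed.

Lemma S_lip_pos m n (S : vec n -> vec m) (HSlip : loc_lipschitz S) x0 :
  exists r L, 0 < r /\ 0 <= L /\ forall x y, vnorm (vsub x x0) <= r -> vnorm (vsub y x0) <= r ->
      vnorm (vsub (S x) (S y)) <= L * vnorm (vsub x y).
Proof.
  destruct (HSlip x0) as [r [L [Hr H]]]. exists r, (Rabs L). split; auto. split. apply Rabs_pos.
  intros x y Hx Hy. eapply Rle_trans. apply H; auto. apply Rmult_le_compat_r. apply vnorm_nonneg. apply Rle_abs.
Qed.

Lemma f_lip m n (J : vec m -> vec n -> R) Jy Ju (HJ : has_gradients J Jy Ju)
  (HJy : continuous2 Jy) (HJu : continuous2 Ju) S (HSlip : loc_lipschitz S) x0 :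
  exists rho K, 0 < rho /\ 0 <= K /\ forall y y', vnorm (vsub y x0) < rho -> vnorm (vsub y' x0) < rho ->
     Rabs (compf J S y' - compf J S y) <= K * vnorm (vsub y' y).
Proof.
  destruct (J_local m n J Jy Ju HJ HJy HJu (S x0) x0 1 ltac:(lra)) as [del [Hdel HJl]].
  destruct (S_lip_pos m n S HSlip x0) as [r [L [Hr [HL HSL]]]].
  set (rho := Rmin r (del / (L + 1))).
  assert (Hrho : 0 < rho) by (apply Rmin_glb_lt; auto; apply Rdiv_lt_0_compat; lra).
  set (a0 := Jy (S x0) x0). set (b0 := Ju (S x0) x0).
  exists rho, ((vnorm a0 + 1) * L + vnorm b0 + 1). split; auto. split.
  pose proof (vnorm_nonneg m a0); pose proof (vnorm_nonneg n b0); nra.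
  assert (Hin : forall y, vnorm (vsub y x0) < rho -> vnorm (vsub (S y) (S x0)) + vnorm (vsub y x0) < del).
  { intros y Hy. pose proof (Rmin_l r (del / (L + 1))). pose proof (Rmin_r r (del / (L + 1))). fold rho in H, H0.
    assert (vnorm (vsub x0 x0) <= r) by (rewrite vsub_self, vnorm_zero; lra).
    specialize (HSL y x0 ltac:(lra) H1).
    assert ((L + 1) * vnorm (vsub y x0) < del).
    { apply Rmult_lt_reg_r with (/ (L + 1)). apply Rinv_0_lt_compat; lra.
      replace ((L + 1) * vnorm (vsub y x0) * / (L + 1)) with (vnorm (vsub y x0)) by (field; lra).
      unfold Rdiv in H0. lra. }
    lra. }
  intros y y' Hy Hy'.
  specialize (HJl (S y) y (vsub (S y') (S y)) (vsub y' y) (Hin y Hy)).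
  rewrite !vadd_vsub in HJl. specialize (HJl (Hin y' Hy')).
  assert (Hs : vnorm (vsub (S y') (S y)) <= L * vnorm (vsub y' y)).
  { pose proof (Rmin_l r (del / (L + 1))). fold rho in H. apply HSL; lra. }
  unfold compf. fold a0 b0 in HJl.
  pose proof (cauchy_schwarz m a0 (vsub (S y') (S y))). pose proof (cauchy_schwarz n b0 (vsub y' y)).
  pose proof (vnorm_nonneg m a0); pose proof (vnorm_nonneg n b0). pose proof (vnorm_nonneg n (vsub y' y)).
  pose proof (vnorm_nonneg m (vsub (S y') (S y))).
  set (X := J (S y') y' - J (S y) y) in *.
  assert (Rabs X <= Rabs (dot a0 (vsub (S y') (S y))) + Rabs (dot b0 (vsub y' y)) + 1 * (vnorm (vsub (S y') (S y)) + vnorm (vsub y' y))).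
  { replace X with ((X - dot a0 (vsub (S y') (S y)) - dot b0 (vsub y' y)) + dot a0 (vsub (S y') (S y)) + dot b0 (vsub y' y)) by ring.
    eapply Rle_trans. apply Rabs_triang. pose proof (Rabs_triang (X - dot a0 (vsub (S y') (S y)) - dot b0 (vsub y' y)) (dot a0 (vsub (S y') (S y)))). lra. }
  assert (vnorm a0 * vnorm (vsub (S y') (S y)) <= vnorm a0 * (L * vnorm (vsub y' y))) by (apply Rmult_le_compat_l; auto).
  nra.
Qed.

Lemma g_upper n (f : vec n -> R) x0 rho K : 0 < rho -> 0 <= K ->
  (forall y y', vnorm (vsub y x0) < rho -> vnorm (vsub y' x0) < rho -> Rabs (f y' - f y) <= K * vnorm (vsub y' y)) ->
  forall x g, vnorm (vsub x x0) < rho / 2 -> clarke_sub f x g -> vnorm g <= K + 1.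
Proof.
  intros Hr HK HL x g Hx Hg. set (del := rho / 4 / (vnorm g + 1)).
  pose proof (vnorm_nonneg n g).
  assert (Hdel : 0 < del) by (apply Rdiv_lt_0_compat; lra).
  assert (Hdel2 : del <= rho / 4). { unfold del. apply Rmult_le_reg_r with (vnorm g + 1). lra. unfold Rdiv. rewrite Rmult_assoc, Rinv_l by lra. nra. }
  destruct (Hg g 1 del ltac:(lra) Hdel) as [y [t [Hy [Ht Hq]]]].
  assert (Hy0 : vnorm (vsub y x0) < rho). { pose proof (vnorm_dist_triang n y x x0). lra. }
  assert (Htg : t * vnorm g < rho / 4).
  { apply Rle_lt_trans with (del * vnorm g). apply Rmult_le_compat_r; lra.
    unfold del. apply Rmult_lt_reg_r with (vnorm g + 1). lra. replace (rho / 4 / (vnorm g + 1) * vnorm g * (vnorm g + 1)) with (rho / 4 * vnorm g) by (field; lra). nra. }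
  assert (Hy1 : vnorm (vsub (vadd y (vscal t g)) x0) < rho).
  { replace (vsub (vadd y (vscal t g)) x0) with (vadd (vsub y x0) (vscal t g)) by (apply functional_extensionality; intros; unfold vsub, vadd, vscal; ring).
    eapply Rle_lt_trans. apply vnorm_triang. rewrite vnorm_scal, Rabs_pos_eq by lra.
    pose proof (vnorm_dist_triang n y x x0). lra. }
  specialize (HL _ _ Hy0 Hy1). rewrite vsub_eq in HL.
  replace (vadd (vadd y (vscal t g)) (vscal (-1) y)) with (vscal t g) in HL by (apply functional_extensionality; intros; unfold vadd, vscal; ring).
  rewrite vnorm_scal, (Rabs_pos_eq t) in HL by lra.
  assert (Hq2 : dot g g - 1 < K * vnorm g).
  { apply Rlt_le_trans with ((f (vadd y (vscal t g)) - f y) / t); auto.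
    apply Rmult_le_reg_r with t. lra. unfold Rdiv. rewrite Rmult_assoc, Rinv_l by lra.
    pose proof (Rle_abs (f (vadd y (vscal t g)) - f y)). nra. }
  rewrite <- vnorm_sq in Hq2. nra.
Qed.

Lemma vscal_sub_l n (x y : vec n) t : vsub (vadd x (vscal t y)) x = vscal t y.
Proof. apply vsub_vadd_l. Qed.

Lemma bouligand_bound m n (S : vec n -> vec m) x0 r L : 0 < r ->
  (forall x y, vnorm (vsub x x0) <= r -> vnorm (vsub y x0) <= r -> vnorm (vsub (S x) (S y)) <= L * vnorm (vsub x y)) ->
  forall W, bouligand S x0 W -> forall h, vnorm (mvmul W h) <= L * vnorm h.
Proof.
  intros Hr HL W [xj [Aj [Hx [HF HA]]]] h.
  apply Rnot_lt_le. intros Hgt. set (e := (vnorm (mvmul W h) - L * vnorm h) / (4 * (vnorm h + 1))).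
  pose proof (vnorm_nonneg n h).
  assert (He : 0 < e) by (unfold e; apply Rdiv_lt_0_compat; lra).
  destruct (Hx (r / 2) ltac:(lra)) as [N1 HN1]. destruct (HA e He) as [N2 HN2].
  set (j := Nat.max N1 N2). specialize (HN1 j ltac:(unfold j; lia)). specialize (HN2 j ltac:(unfold j; lia)).
  destruct (HF j e He) as [del [Hdel HFj]].
  set (s := Rmin del (r / 2) / (2 * (vnorm h + 1))).
  assert (Hm : 0 < Rmin del (r / 2)) by (apply Rmin_glb_lt; lra).
  assert (Hs : 0 < s) by (unfold s; apply Rdiv_lt_0_compat; lra).
  assert (Hsh : s * vnorm h < Rmin del (r / 2)).
  { unfold s. apply Rle_lt_trans with (Rmin del (r / 2) / 2). 
    apply Rmult_le_reg_r with (2 * (vnorm h + 1)). lra.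
    replace (Rmin del (r / 2) / (2 * (vnorm h + 1)) * vnorm h * (2 * (vnorm h + 1))) with (Rmin del (r / 2) * vnorm h) by (field; lra). nra. lra. }
  pose proof (Rmin_l del (r / 2)). pose proof (Rmin_r del (r / 2)).
  specialize (HFj (vscal s h)). rewrite vnorm_scal, Rabs_pos_eq in HFj by lra. specialize (HFj ltac:(lra)).
  assert (Hin1 : vnorm (vsub (vadd (xj j) (vscal s h)) x0) <= r).
  { replace (vsub (vadd (xj j) (vscal s h)) x0) with (vadd (vsub (xj j) x0) (vscal s h)) by (apply functional_extensionality; intros; unfold vsub, vadd, vscal; ring).
    eapply Rle_trans. apply vnorm_triang. rewrite vnorm_scal, Rabs_pos_eq by lra. lra. }
  specialize (HL _ (xj j) Hin1 ltac:(lra)). rewrite vscal_sub_l, vnorm_scal, Rabs_pos_eq in HL by lra.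
  rewrite mvmul_scal in HFj.
  assert (HAh : s * vnorm (mvmul (Aj j) h) <= L * (s * vnorm h) + e * (s * vnorm h)).
  { replace (s * vnorm (mvmul (Aj j) h)) with (vnorm (vscal s (mvmul (Aj j) h))) by (rewrite vnorm_scal, Rabs_pos_eq; lra).
    replace (vscal s (mvmul (Aj j) h)) with (vsub (vsub (S (vadd (xj j) (vscal s h))) (S (xj j))) (vsub (vsub (S (vadd (xj j) (vscal s h))) (S (xj j))) (vscal s (mvmul (Aj j) h)))) by (apply functional_extensionality; intros; unfold vsub; ring).
    eapply Rle_trans. apply vnorm_sub_triang. lra. }
  assert (HAh2 : vnorm (mvmul (Aj j) h) <= L * vnorm h + e * vnorm h).
  { apply Rmult_le_reg_l with s; auto. lra. }
  pose proof (mnorm_spec m n (msub (Aj j) W) h) as Hms. rewrite mvmul_msub in Hms.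
  assert (vnorm (mvmul W h) <= vnorm (mvmul (Aj j) h) + vnorm (vsub (mvmul (Aj j) h) (mvmul W h))).
  { rewrite vnorm_sub_sym. replace (mvmul W h) with (vadd (mvmul (Aj j) h) (vsub (mvmul W h) (mvmul (Aj j) h))) at 1 by (apply vadd_vsub). apply vnorm_triang. }
  pose proof (mnorm_nonneg m n (msub (Aj j) W)).
  assert (mnorm (msub (Aj j) W) * vnorm h <= e * vnorm h) by (apply Rmult_le_compat_r; lra).
  assert (e * vnorm h + e * vnorm h < vnorm (mvmul W h) - L * vnorm h).
  { unfold e. apply Rle_lt_trans with ((vnorm (mvmul W h) - L * vnorm h) / 2).
    apply Rmult_le_reg_r with (4 * (vnorm h + 1)). lra.
    replace (((vnorm (mvmul W h) - L * vnorm h) / (4 * (vnorm h + 1)) * vnorm h + (vnorm (mvmul W h) - L * vnorm h) / (4 * (vnorm h + 1)) * vnorm h) * (4 * (vnorm h + 1))) with ((vnorm (mvmul W h) - L * vnorm h) * (2 * vnorm h)) by (field; lra).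
    nra. lra. }
  lra.
Qed.

Lemma chain_lower m n (J : vec m -> vec n -> R) Jy Ju (HJ : has_gradients J Jy Ju) S x A h :
  frechet_diff S x A -> forall eta, 0 < eta -> exists tau, 0 < tau /\ forall t, 0 < t < tau ->
   dot (Jy (S x) x) (mvmul A h) + dot (Ju (S x) x) h - eta <= (compf J S (vadd x (vscal t h)) - compf J S x) / t.
Proof.
  intros HF eta Heta.
  set (ax := Jy (S x) x). set (bx := Ju (S x) x).
  pose proof (vnorm_nonneg m ax) as P1. pose proof (vnorm_nonneg n h) as P2. pose proof (vnorm_nonneg m (mvmul A h)) as P3.
  set (e2 := Rmin 1 (eta / (2 * (vnorm ax + 1) * (vnorm h + 1)))).
  assert (He2 : 0 < e2) by (apply Rmin_glb_lt; [lra| apply Rdiv_lt_0_compat; nra]).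
  assert (He2a : e2 <= 1) by apply Rmin_l.
  assert (He2b : e2 <= eta / (2 * (vnorm ax + 1) * (vnorm h + 1))) by apply Rmin_r.
  set (k := vnorm (mvmul A h) + 2 * vnorm h + 1).
  set (e1 := eta / (2 * k)).
  assert (Hk : 0 < k) by (unfold k; lra).
  assert (He1 : 0 < e1) by (unfold e1; apply Rdiv_lt_0_compat; lra).
  destruct (HJ (S x) x e1 He1) as [d1 [Hd1 H1]].
  destruct (HF e2 He2) as [d2 [Hd2 H2]].
  set (tau := Rmin (d1 / k) (d2 / (vnorm h + 1))).
  exists tau. split. apply Rmin_glb_lt; apply Rdiv_lt_0_compat; lra.
  intros t Ht. pose proof (Rmin_l (d1 / k) (d2 / (vnorm h + 1))) as H3. pose proof (Rmin_r (d1 / k) (d2 / (vnorm h + 1))) as H4.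
  fold tau in H3, H4.
  assert (Hth : vnorm (vscal t h) < d2).
  { rewrite vnorm_scal, Rabs_pos_eq by lra. apply Rle_lt_trans with (t * (vnorm h + 1)). nra.
    apply Rmult_lt_reg_r with (/ (vnorm h + 1)). apply Rinv_0_lt_compat; lra.
    replace (t * (vnorm h + 1) * / (vnorm h + 1)) with t by (field; lra). unfold Rdiv in H4. lra. }
  specialize (H2 _ Hth). rewrite vnorm_scal, Rabs_pos_eq in H2 by lra. rewrite mvmul_scal in H2.
  set (a := vsub (S (vadd x (vscal t h))) (S x)) in *.
  set (r := vsub a (vscal t (mvmul A h))) in *.
  assert (Ha : a = vadd (vscal t (mvmul A h)) r) by (unfold r; rewrite vadd_vsub; auto).
  assert (Hna : vnorm a <= t * vnorm (mvmul A h) + e2 * (t * vnorm h)).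
  { rewrite Ha. eapply Rle_trans. apply vnorm_triang. rewrite vnorm_scal, Rabs_pos_eq by lra. lra. }
  assert (Hsum : vnorm a + vnorm (vscal t h) <= t * k).
  { rewrite vnorm_scal, Rabs_pos_eq by lra. unfold k. assert (e2 * (t * vnorm h) <= 1 * (t * vnorm h)) by (apply Rmult_le_compat_r; nra). nra. }
  assert (Hsum2 : vnorm a + vnorm (vscal t h) < d1).
  { apply Rle_lt_trans with (t * k); auto. apply Rmult_lt_reg_r with (/ k). apply Rinv_0_lt_compat; lra.
    replace (t * k * / k) with t by (field; lra). unfold Rdiv in H3. lra. }
  specialize (H1 a (vscal t h) Hsum2). unfold compf.
  unfold a in H1 at 1. rewrite vadd_vsub in H1. fold a in H1. fold ax bx in H1.
  apply Rmult_le_reg_r with t. lra. unfold Rdiv. rewrite Rmult_assoc, Rinv_l, Rmult_1_r by lra.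

  assert (HJl : J (S (vadd x (vscal t h))) (vadd x (vscal t h)) - J (S x) x >= dot ax a + dot bx (vscal t h) - e1 * (vnorm a + vnorm (vscal t h))).
  { pose proof (Rle_abs (- (J (S (vadd x (vscal t h))) (vadd x (vscal t h)) - J (S x) x - dot ax a - dot bx (vscal t h)))) as H.
    rewrite Rabs_Ropp in H. lra. }
  rewrite Ha, dot_addr, !dot_scalr in HJl.
  pose proof (cs_ge m ax r).
  assert (vnorm ax * vnorm r <= vnorm ax * (e2 * (t * vnorm h))) by (apply Rmult_le_compat_l; lra).
  assert (e1 * (vnorm a + vnorm (vscal t h)) <= e1 * (t * k)) by (apply Rmult_le_compat_l; lra).
  assert (e1 * (t * k) = t * (eta / 2)) by (unfold e1; field; lra).
  assert (vnorm ax * (e2 * (t * vnorm h)) <= t * (eta / 2)).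
  { replace (vnorm ax * (e2 * (t * vnorm h))) with (t * (e2 * (vnorm ax * vnorm h))) by ring.
    apply Rmult_le_compat_l. lra.
    apply Rle_trans with (eta / (2 * (vnorm ax + 1) * (vnorm h + 1)) * (vnorm ax * vnorm h)).
    apply Rmult_le_compat_r; nra.
    apply Rmult_le_reg_r with (2 * (vnorm ax + 1) * (vnorm h + 1)). nra.
    replace (eta / (2 * (vnorm ax + 1) * (vnorm h + 1)) * (vnorm ax * vnorm h) * (2 * (vnorm ax + 1) * (vnorm h + 1))) with (eta * (vnorm ax * vnorm h)) by (field; lra).
    nra. }
  rewrite <- Ha in HJl. nra.
Qed.

Lemma grad_cont m n (Jy : vec m -> vec n -> vec m) (Ju : vec m -> vec n -> vec n) (S : vec n -> vec m) (HJy : continuous2 Jy) (HJu : continuous2 Ju)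
  (HSlip : loc_lipschitz S) (x0 : vec n) :
  forall e, 0 < e -> exists d, 0 < d /\ forall x, vnorm (vsub x x0) < d ->
    vnorm (vsub (Jy (S x) x) (Jy (S x0) x0)) < e /\ vnorm (vsub (Ju (S x) x) (Ju (S x0) x0)) < e.
Proof.
  intros e He. destruct (HJy (S x0) x0 e He) as [d1 [Hd1 H1]]. destruct (HJu (S x0) x0 e He) as [d2 [Hd2 H2]].
  set (d := Rmin d1 d2). assert (Hd : 0 < d) by (apply Rmin_glb_lt; auto).
  destruct (S_cont m n S HSlip x0 (d / 2) ltac:(lra)) as [dS [HdS HS]].
  exists (Rmin dS (d / 2)). split. apply Rmin_glb_lt; lra.
  intros x Hx. pose proof (Rmin_l dS (d / 2)). pose proof (Rmin_r dS (d / 2)).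
  specialize (HS x ltac:(lra)). pose proof (Rmin_l d1 d2). pose proof (Rmin_r d1 d2). fold d in H3, H4.
  split; [apply H1 | apply H2]; lra.
Qed.

Lemma W_ineq m n (J : vec m -> vec n -> R) Jy Ju (HJ : has_gradients J Jy Ju)
  (HJy : continuous2 Jy) (HJu : continuous2 Ju) S (HSlip : loc_lipschitz S) x0 h eps del :
  0 < eps -> 0 < del ->
  (forall y t, vnorm (vsub y x0) < del -> 0 < t < del -> (compf J S (vadd y (vscal t h)) - compf J S y) / t <= - eps) ->
  forall W, bouligand S x0 W -> dot (Jy (S x0) x0) (mvmul W h) + dot (Ju (S x0) x0) h <= - eps.
Proof.
  intros He Hd Hq W [xj [Aj [Hx [HF HA]]]].
  set (a0 := Jy (S x0) x0). set (b0 := Ju (S x0) x0).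
  assert (HDj : forall j, vnorm (vsub (xj j) x0) < del ->
     dot (Jy (S (xj j)) (xj j)) (mvmul (Aj j) h) + dot (Ju (S (xj j)) (xj j)) h <= - eps).
  { intros j Hj. apply Rnot_lt_le. intros Hgt.
    set (D := dot (Jy (S (xj j)) (xj j)) (mvmul (Aj j) h) + dot (Ju (S (xj j)) (xj j)) h) in *.
    destruct (chain_lower m n J Jy Ju HJ S (xj j) (Aj j) h (HF j) ((D + eps) / 2) ltac:(lra)) as [tau [Htau Hc]].
    set (t := Rmin tau del / 2). assert (0 < Rmin tau del) by (apply Rmin_glb_lt; auto).
    pose proof (Rmin_l tau del). pose proof (Rmin_r tau del).
    specialize (Hc t ltac:(unfold t; lra)). specialize (Hq (xj j) t Hj ltac:(unfold t; lra)). fold D in Hc. lra. }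
  apply Rnot_lt_le. intros Hgt. set (e := (dot a0 (mvmul W h) + dot b0 h + eps) / 2).
  assert (He0 : 0 < e) by (unfold e; lra).
  pose proof (vnorm_nonneg n h). pose proof (vnorm_nonneg m a0). pose proof (vnorm_nonneg m (mvmul W h)).
  set (c := vnorm (mvmul W h) + 2 * vnorm h + vnorm a0 * vnorm h + 1).
  assert (Hc : 0 < c) by (unfold c; nra).
  assert (Hec : 0 < e / c) by (apply Rdiv_lt_0_compat; lra).
  destruct (grad_cont m n Jy Ju S HJy HJu HSlip x0 (e / c) Hec) as [dg [Hdg Hg]].
  destruct (Hx (Rmin del dg)) as [N1 HN1]. apply Rmin_glb_lt; auto.
  destruct (HA (Rmin 1 (e / c))) as [N2 HN2]. apply Rmin_glb_lt; lra.
  set (j := Nat.max N1 N2). specialize (HN1 j ltac:(unfold j; lia)). specialize (HN2 j ltac:(unfold j; lia)).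
  pose proof (Rmin_l del dg). pose proof (Rmin_r del dg). pose proof (Rmin_l 1 (e / c)). pose proof (Rmin_r 1 (e / c)).
  specialize (HDj j ltac:(lra)). destruct (Hg (xj j) ltac:(lra)) as [Ha Hb]. fold a0 b0 in Ha, Hb.
  set (aj := Jy (S (xj j)) (xj j)) in *. set (bj := Ju (S (xj j)) (xj j)) in *.
  pose proof (mnorm_spec m n (msub (Aj j) W) h) as Hms. rewrite mvmul_msub in Hms.
  set (M := mnorm (msub (Aj j) W)) in *.
  assert (HAh : vnorm (mvmul (Aj j) h) <= vnorm (mvmul W h) + vnorm h).
  { replace (mvmul (Aj j) h) with (vadd (mvmul W h) (vsub (mvmul (Aj j) h) (mvmul W h))) by apply vadd_vsub.
    eapply Rle_trans. apply vnorm_triang. assert (M * vnorm h <= 1 * vnorm h) by (apply Rmult_le_compat_r; lra). lra. }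
  assert (Hdec : dot aj (mvmul (Aj j) h) + dot bj h - (dot a0 (mvmul W h) + dot b0 h)
     = dot (vsub aj a0) (mvmul (Aj j) h) + dot a0 (vsub (mvmul (Aj j) h) (mvmul W h)) + dot (vsub bj b0) h).
  { rewrite !dot_subl, !dot_subr. ring. }
  pose proof (cs_ge m (vsub aj a0) (mvmul (Aj j) h)). pose proof (cs_ge m a0 (vsub (mvmul (Aj j) h) (mvmul W h))).
  pose proof (cs_ge n (vsub bj b0) h).
  pose proof (vnorm_nonneg m (vsub aj a0)). pose proof (vnorm_nonneg n (vsub bj b0)).
  pose proof (vnorm_nonneg m (mvmul (Aj j) h)). pose proof (vnorm_nonneg m (vsub (mvmul (Aj j) h) (mvmul W h))).
  assert (T1 : vnorm (vsub aj a0) * vnorm (mvmul (Aj j) h) <= e / c * (vnorm (mvmul W h) + vnorm h)).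
  { apply Rmult_le_compat; lra. }
  assert (T2 : vnorm a0 * vnorm (vsub (mvmul (Aj j) h) (mvmul W h)) <= vnorm a0 * (e / c * vnorm h)).
  { apply Rmult_le_compat_l; auto. apply Rle_trans with (M * vnorm h); auto. apply Rmult_le_compat_r; lra. }
  assert (T3 : vnorm (vsub bj b0) * vnorm h <= e / c * vnorm h) by (apply Rmult_le_compat_r; lra).
  assert (Tsum : e / c * (vnorm (mvmul W h) + vnorm h) + vnorm a0 * (e / c * vnorm h) + e / c * vnorm h < e).
  { replace (e / c * (vnorm (mvmul W h) + vnorm h) + vnorm a0 * (e / c * vnorm h) + e / c * vnorm h)
      with (e / c * (c - 1)) by (unfold c; ring).
    replace (e / c * (c - 1)) with (e - e / c) by (field; lra). lra. }
  unfold e in *. lra.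
Qed.

Lemma inv_small e : 0 < e -> exists N, forall k, (N <= k)%nat -> / (INR k + 1) < e.
Proof.
  intros He. destruct (INR_unbounded (/ e)) as [N HN]. exists N. intros k Hk.
  apply le_INR in Hk. pose proof (pos_INR N).
  assert (0 < / e) by (apply Rinv_0_lt_compat; auto).
  replace e with (/ / e) by (field; lra). apply Rinv_lt_contravar. nra. lra.
Qed.

Definition vG {m n} (Jy : vec m -> vec n -> vec m) (Ju : vec m -> vec n -> vec n) (S : vec n -> vec m) (u : vec n) (G : mat m n) :=
  vadd (mvmul (mtr G) (Jy (S u) u)) (Ju (S u) u).

Lemma vG_dot m n Jy Ju (S : vec n -> vec m) u G d : dot (vG Jy Ju S u G) d = dot (Jy (S u) u) (mvmul G d) + dot (Ju (S u) u) d.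
Proof. unfold vG. rewrite dot_addl, dot_mtr. auto. Qed.

Lemma phi_set_bd m n Jy Ju (S : vec n -> vec m) (Gs : vec n -> R -> mat m n -> Prop) u D c d :
  (forall G, Gs u D G -> mnorm G <= c) ->
  forall G, Gs u D G -> Rabs (dot (vG Jy Ju S u G) d) <= (vnorm (Jy (S u) u) * Rabs c + vnorm (Ju (S u) u)) * vnorm d.
Proof.
  intros Hc G HG. rewrite vG_dot. eapply Rle_trans. apply Rabs_triang.
  pose proof (cauchy_schwarz m (Jy (S u) u) (mvmul G d)). pose proof (cauchy_schwarz n (Ju (S u) u) d).
  pose proof (mnorm_spec m n G d). pose proof (Hc G HG). pose proof (Rle_abs c).
  pose proof (vnorm_nonneg m (Jy (S u) u)). pose proof (vnorm_nonneg n d). pose proof (mnorm_nonneg m n G).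
  assert (vnorm (Jy (S u) u) * vnorm (mvmul G d) <= vnorm (Jy (S u) u) * (Rabs c * vnorm d)).
  { apply Rmult_le_compat_l; auto. eapply Rle_trans; eauto. apply Rmult_le_compat_r; lra. }
  nra.
Qed.

Lemma phi_ub m n Jy Ju (S : vec n -> vec m) (Gs : vec n -> R -> mat m n -> Prop)
  (HGs : forall u D, 0 < D -> (exists G, Gs u D G) /\ (exists c, forall G, Gs u D G -> mnorm G <= c)) u D d :
  0 < D -> forall G, Gs u D G -> dot (vG Jy Ju S u G) d <= phi Jy Ju S Gs u D d.
Proof.
  intros HD G HG. destruct (HGs u D HD) as [[G0 HG0] [c Hc]]. unfold phi.
  apply (Rsup_ub _ ((vnorm (Jy (S u) u) * Rabs c + vnorm (Ju (S u) u)) * vnorm d)).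
  exists (dot (vG Jy Ju S u G0) d). exists G0; split; auto.
  intros s [G' [HG' ->]]. pose proof (phi_set_bd m n Jy Ju S Gs u D c d Hc G' HG'). fold (vG Jy Ju S u G').
  pose proof (Rle_abs (dot (vG Jy Ju S u G') d)). lra.
  exists G; split; auto.
Qed.

Lemma phi_le m n Jy Ju (S : vec n -> vec m) (Gs : vec n -> R -> mat m n -> Prop)
  (HGs : forall u D, 0 < D -> (exists G, Gs u D G) /\ (exists c, forall G, Gs u D G -> mnorm G <= c)) u D d c' :
  0 < D -> (forall G, Gs u D G -> dot (vG Jy Ju S u G) d <= c') -> phi Jy Ju S Gs u D d <= c'.
Proof.
  intros HD H. destruct (HGs u D HD) as [[G0 HG0] [c Hc]]. unfold phi. apply Rsup_le.
  exists (dot (vG Jy Ju S u G0) d). exists G0; split; auto.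
  intros s [G' [HG' ->]]. apply H; auto.
Qed.

Lemma psi_ge m n Jy Ju (S : vec n -> vec m) (Gs : vec n -> R -> mat m n -> Prop)
  (HGs : forall u D, 0 < D -> (exists G, Gs u D G) /\ (exists c, forall G, Gs u D G -> mnorm G <= c)) u D h e :
  0 < D -> 0 < e -> (forall G, Gs u D G -> dot (vG Jy Ju S u G) h <= - e) -> e / vnorm h <= psi Jy Ju S Gs u D.
Proof.
  intros HD He H. destruct (HGs u D HD) as [[G0 HG0] [c Hc]].
  assert (Hh : 0 < vnorm h).
  { destruct (Req_dec (vnorm h) 0) as [E|E]. apply vnorm_eq0 in E. subst h. specialize (H G0 HG0). rewrite dot_zeror in H. lra.
    pose proof (vnorm_nonneg n h). lra. }
  set (h' := vscal (/ vnorm h) h).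
  assert (Hh' : vnorm h' = 1). { unfold h'. rewrite vnorm_scal, Rabs_pos_eq. field; lra. left; apply Rinv_0_lt_compat; auto. }
  assert (Hp : phi Jy Ju S Gs u D h' <= - e / vnorm h).
  { apply phi_le; auto. intros G HG. unfold h'. rewrite dot_scalr. specialize (H G HG).
    apply Rmult_le_reg_l with (vnorm h); auto. rewrite <- Rmult_assoc, Rinv_r by lra.
    replace (vnorm h * (- e / vnorm h)) with (- e) by (field; lra). lra. }
  unfold psi. set (B := (vnorm (Jy (S u) u) * Rabs c + vnorm (Ju (S u) u))).
  assert (Hinf : Rinf (fun s => exists h0 : vec n, vnorm h0 <= 1 /\ s = phi Jy Ju S Gs u D h0) <= phi Jy Ju S Gs u D h').
  { apply (Rinf_le _ (- B)). exists (phi Jy Ju S Gs u D h'). exists h'. split; auto; lra.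
    intros s [h0 [Hh0 ->]]. pose proof (phi_ub m n Jy Ju S Gs HGs u D h0 HD G0 HG0).
    pose proof (phi_set_bd m n Jy Ju S Gs u D c h0 Hc G0 HG0). pose proof (Rle_abs (- dot (vG Jy Ju S u G0) h0)).
    rewrite Rabs_Ropp in H2. fold B in H1.
    assert (B * vnorm h0 <= B * 1). { apply Rmult_le_compat_l; auto. unfold B. pose proof (vnorm_nonneg m (Jy (S u) u)). pose proof (vnorm_nonneg n (Ju (S u) u)). pose proof (Rabs_pos c). nra. }
    lra.
    exists h'. split; auto; lra. }
  replace (- e / vnorm h) with (- (e / vnorm h)) in Hp by (field; lra). lra.
Qed.

Lemma uniform_dir m n (J : vec m -> vec n -> R) Jy Ju (HJ : has_gradients J Jy Ju)
  (HJy : continuous2 Jy) (HJu : continuous2 Ju) S (HSlip : loc_lipschitz S)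
  (Gs : vec n -> R -> mat m n -> Prop)
  (HG2 : forall (uk : nat -> vec n) (Dk : nat -> R) (u : vec n),
           (forall k, 0 < Dk k) -> vseq_conv uk u -> Rseq_conv Dk 0 ->
           ~ clarke_sub (compf J S) u vzero ->
           forall eps, 0 < eps -> exists K, forall k, (K <= k)%nat ->
             forall G, Gs (uk k) (Dk k) G ->
               exists W, bouligand S u W /\ mnorm (msub G W) < eps)
  ub h eps del :
  ~ clarke_sub (compf J S) ub vzero -> 0 < eps -> 0 < del ->
  (forall y t, vnorm (vsub y ub) < del -> 0 < t < del -> (compf J S (vadd y (vscal t h)) - compf J S y) / t <= - eps) ->
  exists eta, 0 < eta /\ forall x D G, vnorm (vsub x ub) < eta -> 0 < D < eta -> Gs x D G ->
     dot (vG Jy Ju S x G) h <= - eps / 2.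
Proof.
  intros Hnst He Hd Hq.
  destruct (classic (exists eta, 0 < eta /\ forall x D G, vnorm (vsub x ub) < eta -> 0 < D < eta -> Gs x D G ->
     dot (vG Jy Ju S x G) h <= - eps / 2)) as [|Hn]; auto. exfalso.
  assert (Hc : forall i : nat, exists p : vec n * R * mat m n,
    vnorm (vsub (fst (fst p)) ub) < / (INR i + 1) /\ 0 < snd (fst p) < / (INR i + 1) /\
    Gs (fst (fst p)) (snd (fst p)) (snd p) /\ - eps / 2 < dot (vG Jy Ju S (fst (fst p)) (snd p)) h).
  { intros i. apply NNPP; intro Hne. apply Hn. exists (/ (INR i + 1)). split. apply RinvN_pos.
    intros x D G Hx HD HG. apply Rnot_lt_le. intro Hlt. apply Hne. exists (x, D, G). simpl. auto. }
  set (F := fun i => proj1_sig (constructive_indefinite_description _ (Hc i))).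
  assert (HF : forall i, vnorm (vsub (fst (fst (F i))) ub) < / (INR i + 1) /\ 0 < snd (fst (F i)) < / (INR i + 1) /\
    Gs (fst (fst (F i))) (snd (fst (F i))) (snd (F i)) /\ - eps / 2 < dot (vG Jy Ju S (fst (fst (F i))) (snd (F i))) h).
  { intros i. unfold F. apply (proj2_sig (constructive_indefinite_description _ (Hc i))). }
  set (xs := fun i => fst (fst (F i))). set (Ds := fun i => snd (fst (F i))).
  assert (HDpos : forall k, 0 < Ds k) by (intros k; apply (HF k)).
  assert (Hxc : vseq_conv xs ub).
  { intros e' He'. destruct (inv_small e' He') as [N HN]. exists N. intros k Hk. specialize (HN k Hk).
    destruct (HF k) as [H1 _]. unfold xs. lra. }
  assert (HDc : Rseq_conv Ds 0).
  { intros e' He'. destruct (inv_small e' He') as [N HN]. exists N. intros k Hk. specialize (HN k Hk).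
    destruct (HF k) as [_ [H1 _]]. unfold Ds. rewrite Rminus_0_r, Rabs_pos_eq; lra. }
  destruct (S_lip_pos m n S HSlip ub) as [r [L [Hr [HL HSL]]]].
  pose proof (vnorm_nonneg n h) as Hh0.
  set (a0 := Jy (S ub) ub). set (b0 := Ju (S ub) ub).
  pose proof (vnorm_nonneg m a0) as Ha0.
  set (e2 := eps / (4 * (vnorm a0 + 2 + L) * (vnorm h + 1))).
  assert (He2 : 0 < e2) by (unfold e2; apply Rdiv_lt_0_compat; nra).
  set (e1 := Rmin 1 e2).
  assert (He1 : 0 < e1) by (unfold e1; apply Rmin_glb_lt; lra).
  assert (He1' : e1 <= 1) by apply Rmin_l.
  assert (He12 : e1 <= e2) by apply Rmin_r.
  destruct (HG2 xs Ds ub HDpos Hxc HDc Hnst e1 He1) as [K HK].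
  destruct (grad_cont m n Jy Ju S HJy HJu HSlip ub e1 He1) as [dg [Hdg Hg]].
  destruct (inv_small dg Hdg) as [N HN].
  set (k := Nat.max K N).
  destruct (HF k) as [Hx [_ [HGk Hdot]]].
  destruct (HK k ltac:(unfold k; lia) (snd (F k)) HGk) as [W [HW HWm]].
  specialize (HN k ltac:(unfold k; lia)).
  destruct (Hg (xs k) ltac:(unfold xs; lra)) as [Ha Hb].
  pose proof (W_ineq m n J Jy Ju HJ HJy HJu S HSlip ub h eps del He Hd Hq W HW) as HWi.
  pose proof (bouligand_bound m n S ub r L Hr HSL W HW h) as HWb.
  fold a0 b0 in HWi, Ha, Hb. change (fst (fst (F k))) with (xs k) in Hdot.
  set (G := snd (F k)) in *. set (x := xs k) in *.
  rewrite vG_dot in Hdot.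
  set (ax := Jy (S x) x) in *. set (bx := Ju (S x) x) in *.
  pose proof (mnorm_spec m n (msub G W) h) as Hms. rewrite mvmul_msub in Hms.
  assert (Hdec : dot ax (mvmul G h) + dot bx h - (dot a0 (mvmul W h) + dot b0 h)
     = dot ax (vsub (mvmul G h) (mvmul W h)) + dot (vsub ax a0) (mvmul W h) + dot (vsub bx b0) h).
  { rewrite !dot_subl, !dot_subr. ring. }
  pose proof (cs_le m ax (vsub (mvmul G h) (mvmul W h))). pose proof (cs_le m (vsub ax a0) (mvmul W h)).
  pose proof (cs_le n (vsub bx b0) h).
  assert (Hax : vnorm ax <= vnorm a0 + 1).
  { replace ax with (vadd a0 (vsub ax a0)) by apply vadd_vsub. eapply Rle_trans. apply vnorm_triang. lra. }
  pose proof (vnorm_nonneg m ax). pose proof (vnorm_nonneg m (vsub ax a0)). pose proof (vnorm_nonneg n (vsub bx b0)).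
  pose proof (vnorm_nonneg m (vsub (mvmul G h) (mvmul W h))). pose proof (vnorm_nonneg m (mvmul W h)).
  pose proof (mnorm_nonneg m n (msub G W)).
  assert (T1 : vnorm ax * vnorm (vsub (mvmul G h) (mvmul W h)) <= (vnorm a0 + 1) * (e1 * vnorm h)).
  { apply Rmult_le_compat; auto. eapply Rle_trans; eauto. apply Rmult_le_compat_r; lra. }
  assert (T2 : vnorm (vsub ax a0) * vnorm (mvmul W h) <= e1 * (L * vnorm h)) by (apply Rmult_le_compat; lra).
  assert (T3 : vnorm (vsub bx b0) * vnorm h <= e1 * vnorm h) by (apply Rmult_le_compat_r; lra).
  assert (Tsum : (vnorm a0 + 1) * (e1 * vnorm h) + e1 * (L * vnorm h) + e1 * vnorm h <= eps / 4).
  { replace ((vnorm a0 + 1) * (e1 * vnorm h) + e1 * (L * vnorm h) + e1 * vnorm h) with (e1 * ((vnorm a0 + 2 + L) * vnorm h)) by ring.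
    apply Rle_trans with (e2 * ((vnorm a0 + 2 + L) * vnorm h)). apply Rmult_le_compat_r; nra.
    unfold e2. apply Rmult_le_reg_r with (4 * (vnorm a0 + 2 + L) * (vnorm h + 1)). nra.
    replace (eps / (4 * (vnorm a0 + 2 + L) * (vnorm h + 1)) * ((vnorm a0 + 2 + L) * vnorm h) * (4 * (vnorm a0 + 2 + L) * (vnorm h + 1)))
      with (eps * ((vnorm a0 + 2 + L) * vnorm h)) by (field; nra).
    replace (eps / 4 * (4 * (vnorm a0 + 2 + L) * (vnorm h + 1))) with (eps * ((vnorm a0 + 2 + L) * (vnorm h + 1))) by field.
    apply Rmult_le_compat_l; nra. }
  lra.
Qed.

Lemma uniform_exp m n (J : vec m -> vec n -> R) Jy Ju (HJ : has_gradients J Jy Ju)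
  (HJy : continuous2 Jy) (HJu : continuous2 Ju) S (HSlip : loc_lipschitz S)
  (Gs : vec n -> R -> mat m n -> Prop)
  (HGs : forall u D, 0 < D -> (exists G, Gs u D G) /\ (exists c, forall G, Gs u D G -> mnorm G <= c))
  (HG1 : forall u D, 0 < D -> forall xi W, vnorm (vsub xi u) <= D -> bouligand S xi W -> Gs u D W)
  (HD : forall u h, exists G, bouligand S u G /\ dir_deriv S u h (mvmul G h)) ub :
  forall eps, 0 < eps -> exists eta, 0 < eta /\ forall x D d, vnorm (vsub x ub) < eta -> 0 < D < eta ->
    vnorm d <= D -> compf J S (vadd x d) - compf J S x <= phi Jy Ju S Gs x D d + eps * vnorm d.
Proof.
  intros eps He.
  destruct (S_lip_pos m n S HSlip ub) as [r [L [Hr [HL HSL]]]].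
  set (e1 := eps / (2 * (L + 1))). assert (He1 : 0 < e1) by (unfold e1; apply Rdiv_lt_0_compat; lra).
  destruct (J_local m n J Jy Ju HJ HJy HJu (S ub) ub e1 He1) as [dJ [HdJ HJl]].
  destruct (grad_cont m n Jy Ju S HJy HJu HSlip ub e1 He1) as [dg [Hdg Hg]].
  set (eta := Rmin (Rmin (r / 2) dg) (dJ / (2 * (L + 1)))).
  assert (Heta : 0 < eta) by (unfold eta; repeat apply Rmin_glb_lt; try lra; apply Rdiv_lt_0_compat; lra).
  exists eta. split; auto. intros x D d Hx HD0 Hd.
  pose proof (Rmin_l (Rmin (r / 2) dg) (dJ / (2 * (L + 1)))) as M1. pose proof (Rmin_r (Rmin (r / 2) dg) (dJ / (2 * (L + 1)))) as M2.
  pose proof (Rmin_l (r / 2) dg) as M3. pose proof (Rmin_r (r / 2) dg) as M4. fold eta in M1, M2.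
  pose proof (vnorm_nonneg n d) as Hd0.
  assert (Hxd : vnorm (vsub (vadd x d) ub) < 2 * eta).
  { replace (vsub (vadd x d) ub) with (vadd (vsub x ub) d) by (apply functional_extensionality; intros; unfold vsub, vadd; ring).
    eapply Rle_lt_trans. apply vnorm_triang. lra. }
  assert (Hub : vnorm (vsub ub ub) <= r) by (rewrite vsub_self, vnorm_zero; lra).
  assert (HLd : 2 * eta * (L + 1) <= dJ).
  { apply Rle_trans with (2 * (dJ / (2 * (L + 1))) * (L + 1)). apply Rmult_le_compat_r; lra. right; field; lra. }
  assert (Hin1 : vnorm (vsub (S x) (S ub)) + vnorm (vsub x ub) < dJ).
  { pose proof (HSL x ub ltac:(lra) Hub). pose proof (vnorm_nonneg n (vsub x ub)). nra. }
  assert (Hin2 : vnorm (vsub (S (vadd x d)) (S ub)) + vnorm (vsub (vadd x d) ub) < dJ).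
  { pose proof (HSL (vadd x d) ub ltac:(lra) Hub). pose proof (vnorm_nonneg n (vsub (vadd x d) ub)). nra. }
  specialize (HJl (S x) x (vsub (S (vadd x d)) (S x)) d Hin1). rewrite vadd_vsub in HJl. specialize (HJl Hin2).
  set (a := vsub (S (vadd x d)) (S x)) in *.
  assert (Ha : vnorm a <= L * vnorm d).
  { unfold a. eapply Rle_trans. apply HSL; lra. rewrite vsub_eq.
    replace (vadd (vadd x d) (vscal (-1) x)) with d by (apply functional_extensionality; intros; unfold vadd, vscal; ring). lra. }
  destruct (Hg x ltac:(lra)) as [Hga Hgb].
  set (ax := Jy (S x) x) in *. set (bx := Ju (S x) x) in *.
  set (a0 := Jy (S ub) ub) in *. set (b0 := Ju (S ub) ub) in *.
  assert (Hmv : dot ax a <= phi Jy Ju S Gs x D d - dot bx d).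
  { unfold a. rewrite dot_subr. apply (S_mv m n S HSlip HD x d ax). intros t Ht G HB.
    assert (HGG : Gs x D G).
    { apply (HG1 x D ltac:(lra) (vadd x (vscal t d)) G); auto. rewrite vscal_sub_l, vnorm_scal, Rabs_pos_eq by lra. nra. }
    pose proof (phi_ub m n Jy Ju S Gs HGs x D d ltac:(lra) G HGG). rewrite vG_dot in H. fold ax bx in H. lra. }
  unfold compf. pose proof (Rle_abs (J (S (vadd x d)) (vadd x d) - J (S x) x - dot a0 a - dot b0 d)).
  assert (E1 : dot a0 a <= dot ax a + e1 * vnorm a).
  { replace (dot a0 a) with (dot ax a + dot (vsub a0 ax) a) by (rewrite dot_subl; ring).
    pose proof (cs_le m (vsub a0 ax) a). rewrite vnorm_sub_sym in H0.
    assert (vnorm (vsub ax a0) * vnorm a <= e1 * vnorm a) by (apply Rmult_le_compat_r; [apply vnorm_nonneg|lra]). lra. }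
  assert (E2 : dot b0 d <= dot bx d + e1 * vnorm d).
  { replace (dot b0 d) with (dot bx d + dot (vsub b0 bx) d) by (rewrite dot_subl; ring).
    pose proof (cs_le n (vsub b0 bx) d). rewrite vnorm_sub_sym in H0.
    assert (vnorm (vsub bx b0) * vnorm d <= e1 * vnorm d) by (apply Rmult_le_compat_r; [apply vnorm_nonneg|lra]). lra. }
  assert (E3 : 2 * e1 * (vnorm a + vnorm d) <= eps * vnorm d).
  { apply Rle_trans with (2 * e1 * ((L + 1) * vnorm d)). apply Rmult_le_compat_l; lra.
    right. unfold e1. field. lra. }
  lra.
Qed.

Lemma min_div_pos D a b : 0 < D -> 0 < a -> 0 <= b -> 0 < min_div D a b.
Proof. intros. unfold min_div. destruct (Req_EM_T b 0); auto. apply Rmin_glb_lt; auto.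
  apply Rdiv_lt_0_compat; auto. lra. Qed.

Lemma min_div_ge D a b D0 a0 CH : 0 < D0 <= D -> 0 < a0 <= a -> 0 <= b <= CH -> 0 < CH ->
  Rmin D0 (a0 / CH) <= min_div D a b.
Proof. intros. unfold min_div. pose proof (Rmin_l D0 (a0 / CH)). pose proof (Rmin_r D0 (a0 / CH)).
  destruct (Req_EM_T b 0). lra.
  apply Rmin_glb. lra. eapply Rle_trans. apply H4. unfold Rdiv.
  assert (/ CH <= / b) by (apply Rinv_le_contravar; lra).
  apply Rmult_le_compat; try lra. left; apply Rinv_0_lt_compat; lra. Qed.

Ltac rmin_le := match goal with
  | |- Rmin ?a ?b <= ?c => first [apply Rle_trans with a; [apply Rmin_l| rmin_le] | apply Rle_trans with b; [apply Rmin_r| rmin_le]]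
  | _ => lra end.

Theorem corollary3p1
  (m n : nat) (J : vec m -> vec n -> R)
  (Jy : vec m -> vec n -> vec m) (Ju : vec m -> vec n -> vec n)
  (S : vec n -> vec m) (Gs : vec n -> R -> mat m n -> Prop)
  (* J continuously differentiable, with partial gradients Jy, Ju *)
  (HJ : has_gradients J Jy Ju) (HJy : continuous2 Jy) (HJu : continuous2 Ju)
  (* S locally Lipschitz and directionally differentiable *)
  (HSlip : loc_lipschitz S)
  (HSdir : forall u h, exists v, dir_deriv S u h v)
  (* G(u,Delta) nonempty and bounded *)
  (HGs : forall u D, 0 < D ->
           (exists G, Gs u D G) /\ (exists c, forall G, Gs u D G -> mnorm G <= c))
  (* (G1) *)
  (HG1 : forall u D, 0 < D -> forall xi W,
           vnorm (vsub xi u) <= D -> bouligand S xi W -> Gs u D W)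
  (* (G2) *)
  (HG2 : forall (uk : nat -> vec n) (Dk : nat -> R) (u : vec n),
           (forall k, 0 < Dk k) -> vseq_conv uk u -> Rseq_conv Dk 0 ->
           ~ clarke_sub (compf J S) u vzero ->
           forall eps, 0 < eps -> exists K, forall k, (K <= k)%nat ->
             forall G, Gs (uk k) (Dk k) G ->
               exists W, bouligand S u W /\ mnorm (msub G W) < eps)
  (* (D) *)
  (HD : forall u h, exists G, bouligand S u G /\ dir_deriv S u h (mvmul G h))
  (* algorithm parameters *)
  (Dmin eta1 eta2 beta1 beta2 mu CH : R)
  (HDmin : 0 < Dmin) (Heta : 0 < eta1 < eta2) (Heta2 : eta2 < 1)
  (Hbeta : 0 < beta1 < 1) (Hbeta2 : 1 < beta2) (Hmu : 0 < mu <= 1)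
  (* iterates of Algorithm TR *)
  (u : nat -> vec n) (Del : nat -> R) (g : nat -> vec n) (H : nat -> mat n n)
  (d : nat -> vec n) (rho : nat -> R)
  (Hrun : TR_run J Jy Ju S Gs Dmin eta1 eta2 beta1 beta2 mu u Del g H d rho)
  (* no finite termination *)
  (Hnoterm : forall k, g k <> vzero)
  (* bounded Hessian approximations *)
  (HCH : 0 < CH) (HHk : forall k, mnorm (H k) <= CH) :
  forall ubar : vec n, accumulation_point u ubar -> clarke_sub (compf J S) ubar vzero.
Proof.
  intros ubar Hacc. apply NNPP. intros Hnst.
  destruct Hrun as [HD0 Hk].
  set (f := compf J S) in *.
  assert (Hstep : forall k, clarke_sub f (u k) (g k) /\
     (rho k <= eta1 -> u (Datatypes.S k) = u k /\ Del (Datatypes.S k) = beta1 * Del k) /\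
     (eta1 < rho k -> u (Datatypes.S k) = vadd (u k) (d k) /\ Dmin <= Del (Datatypes.S k))).
  { intros k. destruct (Hk k) as [Hc [_ [_ [_ [HR1 [HR2 HR3]]]]]]. cbv zeta in *.
    rewrite Nat.add_1_r in HR1, HR2, HR3. split; auto. split; auto. intros Hr.
    destruct (Rle_lt_dec (rho k) eta2).
    - destruct (HR2 (conj Hr r)) as [-> ->]. split; auto. apply Rmax_l.
    - destruct (HR3 r) as [-> ->]. split; auto. apply Rmax_l. }
  assert (HDp : forall k, 0 < Del k).
  { induction k. lra. destruct (Hstep k) as [_ [H1 H2]]. destruct (Rle_lt_dec (rho k) eta1) as [r|r].
    - destruct (H1 r) as [_ ->]. nra.
    - destruct (H2 r) as [_ Hd]. lra. }
  assert (Hgpos : forall k, 0 < vnorm (g k)).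
  { intros k. pose proof (vnorm_nonneg n (g k)). destruct (Req_dec (vnorm (g k)) 0) as [E|E].
    apply vnorm_eq0 in E. exfalso; apply (Hnoterm k E). lra. }
  assert (HS1 : forall k, eta1 < rho k -> Dmin <= Del k ->
     eta1 * (mu / 2 * vnorm (g k) * min_div (Del k) (vnorm (g k)) (mnorm (H k))) <= f (u k) - f (u (Datatypes.S k))).
  { intros k Hr HDk. destruct (Hk k) as [_ [_ [HA _]]]. cbv zeta in HA. destruct (HA HDk) as [_ [Hpred Hrho]].
    destruct (Hstep k) as [_ [_ H2]]. destruct (H2 Hr) as [Hu _]. rewrite Hu. fold f in Hpred, Hrho.
    set (P := f (u k) - (f (u k) + dot (g k) (d k) + / 2 * quad (d k) (H k))) in *.
    assert (0 < mu / 2 * vnorm (g k) * min_div (Del k) (vnorm (g k)) (mnorm (H k))).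
    { pose proof (min_div_pos (Del k) (vnorm (g k)) (mnorm (H k)) (HDp k) (Hgpos k) (mnorm_nonneg n n (H k))).
      pose proof (Hgpos k). apply Rmult_lt_0_compat; auto. apply Rmult_lt_0_compat; lra. }
    assert (HP : 0 < P) by lra. rewrite Hrho in Hr.
    apply Rmult_lt_compat_r with (r := P) in Hr; auto. unfold Rdiv in Hr. rewrite Rmult_assoc, Rinv_l in Hr by lra. nra. }
  assert (HS2 : forall k, eta1 < rho k -> Del k < Dmin ->
     vnorm (g k) * Del k < psi Jy Ju S Gs (u k) (Del k) /\
     eta1 * (mu / 2 * psi Jy Ju S Gs (u k) (Del k) * min_div (Del k) (psi Jy Ju S Gs (u k) (Del k)) (mnorm (H k)))
        <= f (u k) - f (u (Datatypes.S k))).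
  { intros k Hr HDk. destruct (Hk k) as [_ [_ [_ [HB _]]]]. cbv zeta in HB. destruct (HB HDk) as [_ [Hpred Hrho]].
    destruct (Hstep k) as [_ [_ H2]]. destruct (H2 Hr) as [Hu _]. rewrite Hu. fold f in Hpred, Hrho.
    destruct (Rlt_dec (vnorm (g k) * Del k) (psi Jy Ju S Gs (u k) (Del k))) as [Hlt|Hlt]; [|lra].
    split; auto.
    set (ps := psi Jy Ju S Gs (u k) (Del k)) in *.
    set (P := f (u k) - (f (u k) + phi Jy Ju S Gs (u k) (Del k) (d k) + / 2 * quad (d k) (H k))) in *.
    assert (Hps : 0 < ps). { pose proof (Hgpos k). pose proof (HDp k). nra. }
    assert (0 < mu / 2 * ps * min_div (Del k) ps (mnorm (H k))).
    { pose proof (min_div_pos (Del k) ps (mnorm (H k)) (HDp k) Hps (mnorm_nonneg n n (H k))).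
      apply Rmult_lt_0_compat; auto. apply Rmult_lt_0_compat; lra. }
    assert (HP : 0 < P) by lra. rewrite Hrho in Hr.
    apply Rmult_lt_compat_r with (r := P) in Hr; auto. unfold Rdiv in Hr. rewrite Rmult_assoc, Rinv_l in Hr by lra. nra. }
  assert (Hmono1 : forall k, f (u (Datatypes.S k)) <= f (u k)).
  { intros k. destruct (Rle_lt_dec (rho k) eta1) as [r|r].
    - destruct (Hstep k) as [_ [H1 _]]. destruct (H1 r) as [-> _]. lra.
    - destruct (Rle_lt_dec Dmin (Del k)) as [D1|D1].
      + specialize (HS1 k r D1). pose proof (min_div_pos (Del k) (vnorm (g k)) (mnorm (H k)) (HDp k) (Hgpos k) (mnorm_nonneg n n (H k))).
        pose proof (Hgpos k).
        assert (0 <= mu / 2 * vnorm (g k) * min_div (Del k) (vnorm (g k)) (mnorm (H k))) by (apply Rmult_le_pos; [apply Rmult_le_pos|]; lra).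
        nra.
      + destruct (HS2 k r D1) as [Hl HS]. set (ps := psi Jy Ju S Gs (u k) (Del k)) in *.
        assert (Hps : 0 < ps). { pose proof (Hgpos k). pose proof (HDp k). nra. }
        pose proof (min_div_pos (Del k) ps (mnorm (H k)) (HDp k) Hps (mnorm_nonneg n n (H k))).
        assert (0 <= mu / 2 * ps * min_div (Del k) ps (mnorm (H k))) by (apply Rmult_le_pos; [apply Rmult_le_pos|]; lra).
        nra. }
  assert (Hmono : forall i j, (i <= j)%nat -> f (u j) <= f (u i)).
  { intros i j Hij. induction Hij. lra. specialize (Hmono1 m0). lra. }
  destruct (nonstat_dir n f ubar Hnst) as [h [eps0 [del0 [He0 [Hd0 Hq]]]]].
  assert (Hh : 0 < vnorm h).
  { pose proof (vnorm_nonneg n h). destruct (Req_dec (vnorm h) 0) as [E|E]; [|lra].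
    apply vnorm_eq0 in E. subst h. exfalso. specialize (Hq ubar (del0 / 2)). rewrite vsub_self, vnorm_zero in Hq.
    specialize (Hq Hd0 ltac:(lra)).
    replace (vadd ubar (vscal (del0 / 2) vzero)) with ubar in Hq by (apply functional_extensionality; intros; unfold vadd, vscal, vzero; ring).
    unfold Rminus in Hq. rewrite Rplus_opp_r in Hq. unfold Rdiv in Hq. rewrite Rmult_0_l in Hq. lra. }
  set (c0 := eps0 / 2 / (vnorm h + 1)).
  assert (Hc0 : 0 < c0) by (unfold c0; apply Rdiv_lt_0_compat; lra).
  assert (Hglow : forall k, vnorm (vsub (u k) ubar) < del0 / 2 -> c0 <= vnorm (g k)).
  { intros k Hk0. destruct (Hstep k) as [Hc _].
    pose proof (g_lower n f ubar h eps0 del0 He0 Hd0 Hq (u k) (g k) Hk0 Hc).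
    pose proof (cs_ge n (g k) h). pose proof (vnorm_nonneg n (g k)).
    unfold c0. apply Rmult_le_reg_r with (vnorm h + 1). lra. unfold Rdiv. rewrite Rmult_assoc, Rinv_l by lra. nra. }
  destruct (f_lip m n J Jy Ju HJ HJy HJu S HSlip ubar) as [rho1 [K [Hrho1 [HK HfL]]]]. fold f in HfL.
  assert (Hgup : forall k, vnorm (vsub (u k) ubar) < rho1 / 2 -> vnorm (g k) <= K + 1).
  { intros k Hk0. destruct (Hstep k) as [Hc _]. apply (g_upper n f ubar rho1 K Hrho1 HK HfL (u k)); auto. }
  destruct (uniform_dir m n J Jy Ju HJ HJy HJu S HSlip Gs HG2 ubar h eps0 del0 Hnst He0 Hd0 Hq) as [eta2' [Heta2' Hud]].
  set (cpsi := eps0 / 2 / vnorm h).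
  assert (Hcpsi : 0 < cpsi) by (unfold cpsi; apply Rdiv_lt_0_compat; lra).
  assert (Hpsi : forall x D, vnorm (vsub x ubar) < eta2' -> 0 < D < eta2' -> cpsi <= psi Jy Ju S Gs x D).
  { intros x D Hx HD'. apply (psi_ge m n Jy Ju S Gs HGs x D h (eps0 / 2)); try lra.
    intros G HG. replace (- (eps0 / 2)) with (- eps0 / 2) by field. apply (Hud x D G); auto. }
  set (epsx := (1 - eta1) * mu * cpsi / 8).
  assert (Hepsx : 0 < epsx) by (unfold epsx; assert (0 < 1 - eta1) by lra; apply Rdiv_lt_0_compat; [|lra]; apply Rmult_lt_0_compat; [apply Rmult_lt_0_compat|]; lra).
  destruct (uniform_exp m n J Jy Ju HJ HJy HJu S HSlip Gs HGs HG1 HD ubar epsx Hepsx) as [eta3 [Heta3 Hexp]].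
  fold f in Hexp.
  set (dstar := Rmin (Rmin (Rmin (eta2' / 2) (eta3 / 2)) (cpsi / (2 * (K + 2)))) (Rmin (cpsi / CH) ((1 - eta1) * mu * cpsi / (4 * CH)))).
  set (rr := Rmin (Rmin (del0 / 2) (rho1 / 2)) (Rmin eta2' eta3)).
  assert (Hdstar : 0 < dstar).
  { unfold dstar. assert (0 < 1 - eta1) by lra. pose proof (Rmult_lt_0_compat _ _ H0 (proj1 Hmu)).
    repeat apply Rmin_glb_lt; try lra; apply Rdiv_lt_0_compat; try lra; try nra. }
  assert (Hds : dstar <= eta2' / 2 /\ dstar <= eta3 / 2 /\ dstar <= cpsi / (2 * (K + 2)) /\ dstar <= cpsi / CH /\ dstar <= (1 - eta1) * mu * cpsi / (4 * CH)).
  { unfold dstar. repeat split;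
    rmin_le. }
  assert (Hrr0 : 0 < rr) by (unfold rr; repeat apply Rmin_glb_lt; lra).
  assert (Hrr : rr <= del0 / 2 /\ rr <= rho1 / 2 /\ rr <= eta2' /\ rr <= eta3).
  { unfold rr. repeat split;
    rmin_le. }
  assert (Hthr : forall k, vnorm (vsub (u k) ubar) < rr -> Del k < Dmin -> Del k <= dstar -> eta1 < rho k).
  { intros k Huk HDk Hdk. destruct Hds as [Ds1 [Ds2 [Ds3 [Ds4 Ds5]]]]. destruct Hrr as [R1 [R2 [R3 R4]]].
    destruct (Hk k) as [_ [_ [_ [HB _]]]]. cbv zeta in HB. destruct (HB HDk) as [Hdn [Hpred Hrho]].
    fold f in Hpred, Hrho. pose proof (HDp k) as HDk0.
    set (D := Del k) in *. set (ps := psi Jy Ju S Gs (u k) D) in *.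
    assert (Hps : cpsi <= ps) by (apply Hpsi; lra).
    assert (Hgk : vnorm (g k) <= K + 1) by (apply Hgup; lra).
    assert (HgD : vnorm (g k) * D < ps).
    { assert (D * (2 * (K + 2)) <= cpsi).
      { apply Rle_trans with (cpsi / (2 * (K + 2)) * (2 * (K + 2))). apply Rmult_le_compat_r; lra. right; field; lra. }
      pose proof (vnorm_nonneg n (g k)). nra. }
    destruct (Rlt_dec (vnorm (g k) * D) ps) as [_|Hn]; [|contradiction].
    set (dk := d k) in *. set (Hk' := H k) in *.
    set (ph := phi Jy Ju S Gs (u k) D dk) in *.
    set (P := f (u k) - (f (u k) + ph + / 2 * quad dk Hk')) in *.
    assert (Hmd : D <= min_div D ps (mnorm Hk')).
    { replace D with (Rmin D (cpsi / CH)) at 1 by (apply Rmin_left; lra).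
      apply min_div_ge; try lra. split. apply mnorm_nonneg. apply HHk. }
    assert (HP : mu / 2 * cpsi * D <= P).
    { eapply Rle_trans; [|apply Hpred]. apply Rmult_le_compat; try lra.
      apply Rmult_le_pos; lra. apply Rmult_le_compat_l; lra. }
    assert (HPpos : 0 < P). { assert (0 < mu / 2) by lra. assert (0 < mu / 2 * cpsi * D) by (apply Rmult_lt_0_compat; [apply Rmult_lt_0_compat|]; lra). lra. }
    specialize (Hexp (u k) D dk ltac:(lra) ltac:(lra) Hdn). fold ph in Hexp.
    pose proof (quad_bound n dk Hk'). pose proof (HHk k). fold Hk' in H1.
    pose proof (vnorm_nonneg n dk). pose proof (mnorm_nonneg n n Hk').
    assert (Hq1 : - quad dk Hk' <= CH * (D * D)).
    { pose proof (Rle_abs (- quad dk Hk')). rewrite Rabs_Ropp in H4.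
      assert (mnorm Hk' * (vnorm dk * vnorm dk) <= CH * (D * D)) by (apply Rmult_le_compat; nra). lra. }
    assert (Hq2 : / 2 * (CH * (D * D)) <= epsx * D).
    { assert (CH * D <= (1 - eta1) * mu * cpsi / 4).
      { apply Rle_trans with (CH * ((1 - eta1) * mu * cpsi / (4 * CH))). apply Rmult_le_compat_l; lra. right; field; lra. }
      unfold epsx. nra. }
    assert (Hq3 : epsx * vnorm dk <= epsx * D) by (apply Rmult_le_compat_l; lra).
    assert (H4e : (1 - eta1) * (mu / 2 * cpsi * D) = 4 * (epsx * D)) by (unfold epsx; field).
    assert (Hq4 : (1 - eta1) * (mu / 2 * cpsi * D) <= (1 - eta1) * P) by (apply Rmult_le_compat_l; lra).
    assert (HepsD : 0 < epsx * D) by (apply Rmult_lt_0_compat; lra).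
    rewrite Hrho. apply Rmult_lt_reg_r with P; auto. unfold Rdiv. rewrite Rmult_assoc, Rinv_l, Rmult_1_r by lra.
    unfold P in *. lra. }
  set (Dlow := beta1 * Rmin dstar Dmin).
  assert (HDm : 0 < Rmin dstar Dmin) by (apply Rmin_glb_lt; lra).
  pose proof (Rmin_l dstar Dmin) as Mi1. pose proof (Rmin_r dstar Dmin) as Mi2.
  assert (HDlow : 0 < Dlow) by (unfold Dlow; apply Rmult_lt_0_compat; lra).
  assert (Hlow : forall k, vnorm (vsub (u k) ubar) < rr -> Dlow <= Del k).
  { intros k. destruct k as [|k].
    - intros _. unfold Dlow. assert (beta1 * Rmin dstar Dmin <= 1 * Rmin dstar Dmin) by (apply Rmult_le_compat_r; lra). lra.
    - intros Hu. destruct (Rle_lt_dec (rho k) eta1) as [r|r].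
      + destruct (Hstep k) as [_ [H1 _]]. destruct (H1 r) as [Hu2 HD2]. rewrite HD2. rewrite Hu2 in Hu.
        unfold Dlow. apply Rmult_le_compat_l. lra.
        destruct (Rle_lt_dec Dmin (Del k)) as [D1|D1]. lra.
        destruct (Rle_lt_dec (Del k) dstar) as [D2|D2]. specialize (Hthr k Hu D1 D2). lra. lra.
      + destruct (Hstep k) as [_ [_ H2]]. destruct (H2 r) as [_ HD2].
        unfold Dlow. assert (beta1 * Rmin dstar Dmin <= 1 * Rmin dstar Dmin) by (apply Rmult_le_compat_r; lra). lra. }
  assert (Hsucc : forall k, vnorm (vsub (u k) ubar) < rr -> exists j, (k <= j)%nat /\ u j = u k /\ eta1 < rho j).
  { intros k Hu. apply NNPP; intros Hn.
    assert (Hit : forall i, u (k + i)%nat = u k /\ Del (k + i)%nat = beta1 ^ i * Del k).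
    { induction i. rewrite Nat.add_0_r. split; auto. simpl; ring.
      destruct IHi as [Hu' HD'].
      assert (Hr : rho (k + i)%nat <= eta1).
      { apply Rnot_lt_le; intro Hr. apply Hn. exists (k + i)%nat. split; [lia|split; auto]. }
      destruct (Hstep (k + i)%nat) as [_ [H1 _]]. destruct (H1 Hr) as [Hu2 HD2].
      replace (k + Datatypes.S i)%nat with (Datatypes.S (k + i)) by lia. rewrite Hu2, HD2, HD'. split; auto. simpl; ring. }
    pose proof (HDp k) as HDk.
    destruct (pow_lt_1_zero beta1 ltac:(rewrite Rabs_pos_eq; lra) (Rmin dstar Dmin / Del k) ltac:(apply Rdiv_lt_0_compat; lra)) as [N HN].
    specialize (HN N (le_n N)). rewrite Rabs_pos_eq in HN by (apply pow_le; lra).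
    destruct (Hit N) as [HuN HDN].
    assert (Hsmall : Del (k + N)%nat < Rmin dstar Dmin).
    { rewrite HDN. apply Rmult_lt_reg_r with (/ Del k). apply Rinv_0_lt_compat; lra.
      rewrite Rmult_assoc, Rinv_r by lra. unfold Rdiv in HN. lra. }
    assert (Hr := Hthr (k + N)%nat ltac:(rewrite HuN; auto) ltac:(lra) ltac:(lra)).
    apply Hn. exists (k + N)%nat. split; [lia|split; auto]. }
  set (p0 := c0 * Dlow).
  assert (Hp0 : 0 < p0) by (unfold p0; apply Rmult_lt_0_compat; lra).
  set (k1 := mu / 2 * c0 * Rmin Dmin (c0 / CH)).
  set (k2 := mu / 2 * p0 * Rmin Dlow (p0 / CH)).
  assert (Hmu2 : 0 < mu / 2) by lra.
  assert (Hk1 : 0 < k1).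
  { unfold k1. apply Rmult_lt_0_compat. apply Rmult_lt_0_compat; lra. apply Rmin_glb_lt; [lra|apply Rdiv_lt_0_compat; lra]. }
  assert (Hk2 : 0 < k2).
  { unfold k2. apply Rmult_lt_0_compat. apply Rmult_lt_0_compat; lra. apply Rmin_glb_lt; [lra|apply Rdiv_lt_0_compat; lra]. }
  set (kap := eta1 * Rmin k1 k2).
  assert (Hkap : 0 < kap) by (unfold kap; apply Rmult_lt_0_compat; [lra|apply Rmin_glb_lt; lra]).
  pose proof (Rmin_l k1 k2) as Mk1. pose proof (Rmin_r k1 k2) as Mk2.
  assert (Hdec : forall j, vnorm (vsub (u j) ubar) < rr -> eta1 < rho j -> f (u (Datatypes.S j)) <= f (u j) - kap).
  { intros j Hu Hr. destruct Hrr as [R1 [R2 [R3 R4]]].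
    assert (Hg0 : c0 <= vnorm (g j)) by (apply Hglow; lra).
    pose proof (mnorm_nonneg n n (H j)) as Hm0. pose proof (HHk j) as Hm1.
    destruct (Rle_lt_dec Dmin (Del j)) as [D1|D1].
    - specialize (HS1 j Hr D1).
      pose proof (min_div_ge (Del j) (vnorm (g j)) (mnorm (H j)) Dmin c0 CH ltac:(lra) ltac:(lra) ltac:(lra) HCH) as Hmd.
      assert (k1 <= mu / 2 * vnorm (g j) * min_div (Del j) (vnorm (g j)) (mnorm (H j))).
      { unfold k1. apply Rmult_le_compat; try lra. apply Rmult_le_pos; lra.
        apply Rmin_glb; [lra|]. left; apply Rdiv_lt_0_compat; lra. apply Rmult_le_compat_l; lra. }
      unfold kap. assert (eta1 * Rmin k1 k2 <= eta1 * k1) by (apply Rmult_le_compat_l; lra).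
      assert (eta1 * k1 <= eta1 * (mu / 2 * vnorm (g j) * min_div (Del j) (vnorm (g j)) (mnorm (H j)))) by (apply Rmult_le_compat_l; lra).
      lra.
    - destruct (HS2 j Hr D1) as [Hlt HS]. set (ps := psi Jy Ju S Gs (u j) (Del j)) in *.
      assert (HDl : Dlow <= Del j) by (apply Hlow; auto).
      assert (Hpp : p0 <= ps). { unfold p0. apply Rle_trans with (vnorm (g j) * Del j); [|lra]. apply Rmult_le_compat; lra. }
      pose proof (min_div_ge (Del j) ps (mnorm (H j)) Dlow p0 CH ltac:(lra) ltac:(lra) ltac:(lra) HCH) as Hmd.
      assert (k2 <= mu / 2 * ps * min_div (Del j) ps (mnorm (H j))).
      { unfold k2. apply Rmult_le_compat; try lra. apply Rmult_le_pos; lra.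
        apply Rmin_glb; [lra|]. left; apply Rdiv_lt_0_compat; lra. apply Rmult_le_compat_l; lra. }
      unfold kap. assert (eta1 * Rmin k1 k2 <= eta1 * k2) by (apply Rmult_le_compat_l; lra).
      assert (eta1 * k2 <= eta1 * (mu / 2 * ps * min_div (Del j) ps (mnorm (H j)))) by (apply Rmult_le_compat_l; lra).
      lra. }
  assert (Hlb : forall j, f ubar <= f (u j)).
  { intros j. apply Rnot_lt_le. intros Hlt. set (gap := f ubar - f (u j)).
    assert (Hgap : 0 < gap) by (unfold gap; lra).
    destruct (Hacc (Rmin rho1 (gap / (K + 1))) ltac:(apply Rmin_glb_lt; [lra|apply Rdiv_lt_0_compat; lra]) j) as [k [Hjk Hk0]].
    pose proof (Rmin_l rho1 (gap / (K + 1))). pose proof (Rmin_r rho1 (gap / (K + 1))).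
    assert (Hub : vnorm (vsub ubar ubar) < rho1) by (rewrite vsub_self, vnorm_zero; lra).
    specialize (HfL (u k) ubar ltac:(lra) Hub). rewrite vnorm_sub_sym in HfL.
    assert (K * vnorm (vsub (u k) ubar) < gap).
    { apply Rle_lt_trans with ((K + 1) * vnorm (vsub (u k) ubar)). pose proof (vnorm_nonneg n (vsub (u k) ubar)). nra.
      apply Rmult_lt_reg_r with (/ (K + 1)). apply Rinv_0_lt_compat; lra.
      replace ((K + 1) * vnorm (vsub (u k) ubar) * / (K + 1)) with (vnorm (vsub (u k) ubar)) by (field; lra).
      unfold Rdiv in *. lra. }
    pose proof (Hmono j k Hjk). pose proof (Rle_abs (f ubar - f (u k))). unfold gap in *. lra. }
  assert (Hdesc : forall N : nat, exists j, f (u j) <= f (u O) - INR N * kap).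
  { induction N. exists O. simpl. lra.
    destruct IHN as [j Hj]. destruct Hacc with rr j as [k [Hjk Hk0]]; auto.
    destruct (Hsucc k Hk0) as [j' [Hkj' [Hu' Hr']]].
    assert (Hu'' : vnorm (vsub (u j') ubar) < rr) by (rewrite Hu'; auto).
    pose proof (Hdec j' Hu'' Hr'). rewrite Hu' in H0. pose proof (Hmono j k Hjk).
    exists (Datatypes.S j'). rewrite S_INR. lra. }
  destruct (INR_unbounded ((f (u O) - f ubar) / kap)) as [N HN].
  destruct (Hdesc N) as [j Hj]. pose proof (Hlb j).
  assert (INR N * kap > f (u O) - f ubar).
  { apply Rmult_lt_reg_r with (/ kap). apply Rinv_0_lt_compat; lra. rewrite Rmult_assoc, Rinv_r by lra. unfold Rdiv in HN. lra. }
  lra.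
Qed.
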